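(* Let $A$ be a set of $n$ distinct real numbers whose additive energy satisfies $E(A,A)=c|A|^2$ for some constant $c<5/2$. Then for every $a\in A$ there is an ordering $b_1,b_2,\dots,b_n$ of the elements of $A$ with $b_1=a$ such that the $n-1$ numbers $|b_2-b_1|,|b_3-b_2|,\dots,|b_n-b_{n-1}|$ are pairwise distinct.
   Context: The additive energy of a finite set $A\subset\mathbb{R}$ is $E(A,A)=|\{(x,y,z,w)\in A^4 : x+y=z+w\}|$. *)

(* Defs.v *)
From HB Require Import structures.
From mathcomp Require Import all_boot all_order all_algebra.
From mathcomp Require Import reals.
Set Implicit Arguments. Unset Strict Implicit. Unset Printing Implicit Defensive.
Import Order.TTheory GRing.Theory Num.Theory.
Local Open Scope ring_scope.

(* A finite set of reals is represented by a duplicate-free sequence A,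
   so summing over the elements of A counts each quadruple exactly once. *)
Definition energy (R : numDomainType) (A : seq R) : nat :=
  (\sum_(x <- A) \sum_(y <- A) \sum_(z <- A) \sum_(w <- A) nat_of_bool (x + y == z + w)%R)%N.

Definition gaps (R : numDomainType) (b1 : R) (t : seq R) : seq R :=
  pairmap (fun x y => `|y - x|) b1 t.

(* Main.v *)
Require Import Defs.
From HB Require Import structures.
From mathcomp Require Import all_boot all_order all_algebra all_fingroup.
From mathcomp Require Import reals.
From mathcomp.algebra_tactics Require Import ring lra.
From mathcomp.zify Require Import zify.
Set Implicit Arguments. Unset Strict Implicit. Unset Printing Implicit Defensive.
Import Order.TTheory GRing.Theory Num.Theory.
Lemma leq_sum_nat (m k : nat) (F G : nat -> nat) :
  (forall i, (m <= i < k)%N -> (F i <= G i)%N) ->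
  (\sum_(m <= i < k) F i <= \sum_(m <= i < k) G i)%N.
Proof.
move=> H; rewrite big_nat_cond [X in (_ <= X)%N]big_nat_cond.
by apply: leq_sum => i /andP [Hi _]; exact: H.
Qed.
Lemma sum_pos (N : nat) (c : nat -> nat -> nat) (bA bB bC bD : nat) : (2 <= N)%N ->
  (c 0 1 <= bA)%N ->
  (forall f, 2 <= f -> f < N -> c 0 f <= bB)%N ->
  (forall e, 1 <= e -> e.+2 <= N -> c e e.+1 <= bC)%N ->
  (forall e f, 1 <= e -> e.+2 <= f -> f < N -> c e f <= bD)%N ->
  (\sum_(0 <= f < N) \sum_(0 <= e < f) c e f <= bA + (N-2)*(bB + bC) + 'C(N-2,2) * bD)%N.
Proof.
case: N => [|[|N]] // _ HA HB HC HD.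
rewrite big_nat_recl // big_nat_recl // big_geq // big_nat1 add0n subn2 /=.
rewrite -addnA; apply: leq_add HA _.
have -> : (N * (bB + bC) + 'C(N, 2) * bD = \sum_(0 <= i < N) ((bB + bC) + i * bD))%N.
  by rewrite big_split /= sum_nat_const_nat subn0 -bin2_sum big_distrl.
apply: leq_sum_nat => f /andP [_ Hf].
rewrite big_nat_recl // big_nat_recr //=.
have h1 : (c 0 f.+2 <= bB)%N by apply: HB => //; lia.
have h3 : (c f.+1 f.+2 <= bC)%N by apply: HC => //; lia.
have h2 : (\sum_(0 <= i < f) c i.+1 f.+2 <= f * bD)%N.
  rewrite -[X in (_ <= X * _)%N](subn0 f) -sum_nat_const_nat.
  by apply: leq_sum_nat => e /andP [_ He]; apply: HD; lia.
move: h1 h2 h3; set S := \sum_(_ <= _ < _) _; set P := f * bD; lia.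
Qed.
Section Count.
Variable n : nat.
Local Open Scope group_scope.

Lemma fiber_le (ps : seq 'I_n) (v : seq 'I_n) :
  uniq ps -> #|[set s : 'S_n | map s ps == v]| <= (n - size ps)`!.
Proof.
move=> Ups.
set S := [set s : 'S_n | _].
have [->|[s0 Hs0]] := set_0Vmem S; first by rewrite cards0.
have inj : {in S &, injective (fun s : 'S_n => s * s0^-1)}.
  by move=> x y _ _ /mulIg.
rewrite -(card_in_imset inj).
have -> : (n - size ps)`! = #|perm_on (~: [set x in ps])|.
  by rewrite card_perm cardsCs setCK card_ord cardsE (card_uniqP Ups).
apply: subset_leq_card; apply/subsetP => u /imsetP [s Hs ->].
apply/subsetP => x; rewrite inE => Hx; rewrite !inE; apply: contra Hx => Hxps.
move: Hs Hs0; rewrite !inE => /eqP Hs /eqP Hs0.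
have : s x = s0 x.
  have Hi := Hxps; rewrite -(nth_index x Hxps).
  have Hlt : index x ps < size ps by rewrite index_mem.
  by rewrite -!(nth_map x x) // Hs Hs0.
by rewrite permM => ->; rewrite -permM mulgV perm1.
Qed.

Lemma count_fix (ps : seq 'I_n) (P : seq 'I_n -> bool) : uniq ps ->
  #|[set s : 'S_n | P (map s ps)]| <=
  #|[set v : (size ps).-tuple 'I_n | P v && uniq v]| * (n - size ps)`!.
Proof.
move=> Ups.
set T := [set v : (size ps).-tuple 'I_n | P v && uniq v].
apply: (@leq_trans (\sum_(s : 'S_n) \sum_(v in T) (map s ps == v :> seq _))).
  rewrite -sum1_card big_mkcond /=; apply: leq_sum => s _; rewrite inE.
  case: ifP => // Hs.
  set v0 : (size ps).-tuple 'I_n := map_tuple s (in_tuple ps).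
  have Hv0 : v0 \in T.
    by rewrite inE Hs /= (map_inj_uniq (@perm_inj _ s)) Ups.
  by rewrite (bigD1 v0) //= eqxx.
rewrite exchange_big /= -sum_nat_const; apply: leq_sum => v _.
apply: leq_trans (fiber_le v Ups).
rewrite -sum1_card [X in _ <= X]big_mkcond /=; apply: leq_sum => s _.
by rewrite inE; case: (_ == _).
Qed.
End Count.
Section Main.
Variable R : realType.
Variable A : seq R.
Variable N : nat.
Hypothesis UA : uniq A.
Hypothesis SA : size A = N.+1.
Variable k0 : 'I_N.+1.
Local Notation n := N.+1.
Local Open Scope ring_scope.

Definition Af (i : 'I_n) : R := nth 0 A i.

Lemma Af_inj : injective Af.
Proof. by move=> i j /eqP; rewrite /Af nth_uniq ?SA // => /eqP /val_inj. Qed.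

Definition G (s : 'S_n) (e : nat) : R := `|Af (s (inord e.+1)) - Af (s (inord e))|.

Lemma inord0' : (inord 0 : 'I_n) = ord0.
Proof. by apply: val_inj; rewrite /= inordK. Qed.

Lemma path_ok (s : 'S_n) : s ord0 = k0 ->
  (forall e f : nat, (e < f)%N -> (f < N)%N -> G s e != G s f) ->
  exists t, perm_eq (Af k0 :: t) A /\ uniq (gaps (Af k0) t).
Proof.
move=> s0 H.
set t := [seq Af (s (inord i)) | i <- iota 1 N].
have Ht : forall i, (i <= N)%N -> nth 0 (Af k0 :: t) i = Af (s (inord i)).
  case=> [|i] Hi /=; first by rewrite inord0' s0.
  by rewrite (nth_map 0%N) ?size_iota // nth_iota.
have Ht' : forall i, (i < N)%N -> nth 0 t i = Af (s (inord i.+1)).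
  by move=> i Hi; rewrite -(Ht i.+1).
exists t; split.
- have -> : Af k0 :: t = [seq Af (s (inord i)) | i <- iota 0 n].
    by rewrite /= inord0' s0.
  rewrite -val_enum_ord -map_comp.
  rewrite (eq_map (g := Af \o s)); last by move=> i /=; rewrite inord_val.
  rewrite map_comp.
  have EA : map Af (enum 'I_n) = A.
    rewrite (eq_map (g := nth 0 A \o val)) // map_comp val_enum_ord -SA.
    exact: (mkseq_nth 0 A).
  rewrite -[X in perm_eq _ X]EA.
  apply: perm_map; apply: uniq_perm; rewrite ?enum_uniq ?(map_inj_uniq (@perm_inj _ s)) ?enum_uniq //.
  move=> x; rewrite mem_enum inE; apply/mapP; exists ((s^-1)%g x); first by rewrite mem_enum.
  by rewrite permKV.
- apply/(uniqP 0) => i j; rewrite !inE size_pairmap size_map size_iota => Hi Hj.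
  rewrite !(nth_pairmap 0) ?size_map ?size_iota // Ht' // Ht' // Ht ?(ltnW Hi) // Ht ?(ltnW Hj) //.
  move=> Eij; apply/eqP; rewrite eqn_leq; case: (ltngtP i j) => // Hij.
  + by move: (H _ _ Hij Hj); rewrite /G Eij eqxx.
  + by move: (H _ _ Hij Hi); rewrite /G Eij eqxx.
Qed.
Definition w (v : seq 'I_n) i := nth ord0 v i.
Arguments w : simpl never.
Definition Pg (i1 j1 i2 j2 : nat) (sg : bool) (v : seq 'I_n) :=
  (w v 0 == k0) && (Af (w v j1) - Af (w v i1) ==
     (if sg then Af (w v j2) - Af (w v i2) else Af (w v i2) - Af (w v j2))).
Definition Tset k i1 j1 i2 j2 sg := [set v : k.-tuple 'I_n | Pg i1 j1 i2 j2 sg v && uniq v].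
Definition cnt (e f : nat) := #|[set s : 'S_n | (s ord0 == k0) && (G s e == G s f)]|.

Lemma class_bound (ps : seq 'I_n) e f i1 j1 i2 j2 : uniq ps ->
  nth ord0 ps 0 = ord0 -> nth ord0 ps i1 = inord e -> nth ord0 ps j1 = inord e.+1 ->
  nth ord0 ps i2 = inord f -> nth ord0 ps j2 = inord f.+1 ->
  (i1 < size ps)%N -> (j1 < size ps)%N -> (i2 < size ps)%N -> (j2 < size ps)%N ->
  (cnt e f <= (#|Tset (size ps) i1 j1 i2 j2 true| + #|Tset (size ps) i1 j1 i2 j2 false|)
     * (n - size ps)`!)%N.
Proof.
move=> Ups H0 H1 H2 H3 H4 L1 L2 L3 L4.
rewrite mulnDl.
apply: leq_trans (leq_add (count_fix (Pg i1 j1 i2 j2 true) Ups)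
                            (count_fix (Pg i1 j1 i2 j2 false) Ups)).
apply: leq_trans (leq_card_setU _ _).
apply: subset_leq_card; apply/subsetP => s; rewrite !inE => /andP [/eqP s0 Hg].
have Hw : forall i, (i < size ps)%N -> w (map s ps) i = s (nth ord0 ps i).
  by move=> i Hi; rewrite /w (nth_map ord0).
have W0 : (0 < size ps)%N by case: (ps) L1.
rewrite /Pg !Hw // H0 s0 H1 H2 H3 H4 eqxx /=.
move: Hg; rewrite /G eqr_norm2 opprB.
by case/orP => ->; rewrite ?orbT.
Qed.
Lemma uniq_inord (l : seq nat) : all (fun i => i <= N)%N l -> uniq l ->
  uniq [seq (inord i : 'I_n) | i <- l].
Proof.
move=> /allP Hl Ul; rewrite map_inj_in_uniq // => i j Hi Hj E.
by rewrite -(inordK (Hl i Hi)) -(inordK (Hl j Hj)) E.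
Qed.

Lemma cntA : (2 <= N)%N ->
  (cnt 0 1 <= (#|Tset 3 0 1 1 2 true| + #|Tset 3 0 1 1 2 false|) * (N-2)`!)%N.
Proof.
move=> HN.
have U : uniq [seq (inord i : 'I_n) | i <- [:: 0; 1; 2]%N].
  by apply: uniq_inord => /=; rewrite ?inE; lia.
by apply: (@class_bound _ 0 1 0 1 1 2 U) => /=; rewrite ?inord0'.
Qed.

Lemma cntB f : (2 <= f)%N -> (f < N)%N ->
  (cnt 0 f <= (#|Tset 4 0 1 2 3 true| + #|Tset 4 0 1 2 3 false|) * (N-3)`!)%N.
Proof.
move=> H1 H2.
have U : uniq [seq (inord i : 'I_n) | i <- [:: 0; 1; f; f.+1]%N].
  by apply: uniq_inord => /=; rewrite ?inE; lia.
by apply: (@class_bound _ 0 f 0 1 2 3 U) => /=; rewrite ?inord0'.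
Qed.

Lemma cntC e : (1 <= e)%N -> (e.+2 <= N)%N ->
  (cnt e e.+1 <= (#|Tset 4 1 2 2 3 true| + #|Tset 4 1 2 2 3 false|) * (N-3)`!)%N.
Proof.
move=> H1 H2.
have U : uniq [seq (inord i : 'I_n) | i <- [:: 0; e; e.+1; e.+2]%N].
  by apply: uniq_inord => /=; rewrite ?inE; lia.
by apply: (@class_bound _ e e.+1 1 2 2 3 U) => /=; rewrite ?inord0'.
Qed.

Lemma cntD e f : (1 <= e)%N -> (e.+2 <= f)%N -> (f < N)%N ->
  (cnt e f <= (#|Tset 5 1 2 3 4 true| + #|Tset 5 1 2 3 4 false|) * (N-4)`!)%N.
Proof.
move=> H1 H2 H3.
have U : uniq [seq (inord i : 'I_n) | i <- [:: 0; e; e.+1; f; f.+1]%N].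
  by apply: uniq_inord => /=; rewrite ?inE; lia.
by apply: (@class_bound _ e f 1 2 3 4 U) => /=; rewrite ?inord0'.
Qed.
Lemma card_fix0 : (N`! <= #|[set s : 'S_n | s ord0 == k0]|)%N.
Proof.
have inj : injective (fun u : 'S_n => (u * tperm ord0 k0)%g) by move=> x y /mulIg.
have -> : N`! = #|perm_on [set~ (ord0 : 'I_n)]| by rewrite card_perm cardsC1 card_ord.
rewrite -[X in (X <= _)%N](card_imset _ inj); apply: subset_leq_card; apply/subsetP => s.
case/imsetP => u Hu ->; rewrite inE permM.
have -> : u ord0 = ord0.
  by apply/eqP; apply: contraT => H; have := subsetP Hu ord0; rewrite !inE eqxx; apply.
by rewrite tpermL.
Qed.

Lemma fact_le_sum :
  (forall s : 'S_n, s ord0 = k0 -> exists e f, [/\ (e < f)%N, (f < N)%N & G s e = G s f]) ->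
  (N`! <= \sum_(0 <= f < N) \sum_(0 <= e < f) cnt e f)%N.
Proof.
move=> Hbad; apply: leq_trans card_fix0 _.
apply: (@leq_trans (\sum_(s : 'S_n) \sum_(0 <= f < N) \sum_(0 <= e < f)
          ((s ord0 == k0) && (G s e == G s f) : nat))).
  rewrite -sum1_card big_mkcond /=; apply: leq_sum => s _; rewrite inE.
  case: eqP => // H0; have [e [f [Hef HfN HG]]] := Hbad s H0.
  rewrite (bigD1_seq f) ?mem_index_iota ?iota_uniq //=.
  rewrite (bigD1_seq e) ?mem_index_iota ?iota_uniq //= HG eqxx /=.
  by rewrite -addnA leq_addr.
rewrite exchange_big /=; apply: leq_sum => f _; rewrite exchange_big /=.
apply: leq_sum => e _; rewrite /cnt -sum1_card [X in (_ <= X)%N]big_mkcond /=.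
by apply: leq_sum => s _; rewrite inE; case: (_ && _).
Qed.
Definition Q4 := ('I_n * 'I_n * 'I_n * 'I_n)%type.
Definition Cq (q : Q4) : bool := Af q.1.1.1 + Af q.1.1.2 == Af q.1.2 + Af q.2.

Lemma sumA (F : R -> nat) : (\sum_(x <- A) F x = \sum_(i : 'I_n) F (Af i))%N.
Proof. by rewrite (big_nth 0) big_mkord SA. Qed.

Lemma energy_sum : energy A = (\sum_(q : Q4) Cq q)%N.
Proof.
rewrite /energy sumA.
under eq_bigr => i _ do (rewrite sumA; under eq_bigr => j _ do
   (rewrite sumA; under eq_bigr => k _ do rewrite sumA)).
by rewrite pair_big pair_big pair_big.
Qed.
Definition qx (q : Q4) := q.1.1.1.
Definition qy (q : Q4) := q.1.1.2.
Definition qz (q : Q4) := q.1.2.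
Definition qw (q : Q4) := q.2.
Definition p1 q := (qx q == qz q) && (qy q == qw q).
Definition p2 q := [&& qx q != qz q, qx q == qw q & qy q == qz q].
Definition p3 q := [&& qx q == qy q, uniq [:: qx q; qz q; qw q] & Cq q].
Definition p4 q := uniq [:: qx q; qy q; qz q; qw q] && Cq q.
Definition SQ3z := [set q | p3 q && (qz q == k0)].
Definition SQ3nz := [set q | p3 q && (qz q != k0)].
Definition SQ4x := [set q | p4 q && (qx q == k0)].
Definition SQ4z := [set q | p4 q && (qz q == k0)].
Definition SQ4no := [set q | p4 q && (k0 \notin [:: qx q; qy q; qz q; qw q])].

Lemma card_sum (P : pred Q4) : #|[set q | P q]| = (\sum_q P q)%N.
Proof. by rewrite -sum1_card big_mkcond; apply: eq_bigr => q _; rewrite inE; case: (P q). Qed.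

Lemma sum4 (a b c d e : bool) : (a -> e) -> (b -> e) -> (c -> e) -> (d -> e) ->
  (a -> [&& ~~ b, ~~ c & ~~ d]) -> (b -> ~~ c && ~~ d) -> (c -> ~~ d) ->
  (a + b + c + d <= e)%N.
Proof.
case: a b c d e => [] [] [] [] [] H1 H2 H3 H4 H5 H6 H7 //;
  by [have := H1 isT | have := H2 isT | have := H3 isT | have := H4 isT |
      have := H5 isT | have := H6 isT | have := H7 isT].
Qed.

Lemma pw1 q : (p1 q + p2 q + p3 q + p4 q <= Cq q)%N.
Proof.
case: q => [[[x y] z] w]; rewrite /p1 /p2 /p3 /p4 /Cq /qx /qy /qz /qw /=.
apply: sum4.
- by case/andP => /eqP -> /eqP ->.
- by case/and3P => _ /eqP -> /eqP ->; rewrite addrC.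
- by case/and3P.
- by case/andP.
- by case/andP => /eqP xz /eqP yw; rewrite xz !inE !eqxx /= ?orbT /= ?andbF.
- by case/and3P => xz /eqP xw /eqP yz; rewrite xw yz !inE !eqxx /= ?orbT /= ?andbF.
- by case/and3P => /eqP xy _ _; rewrite xy !inE !eqxx /= ?orbT /= ?andbF.
Qed.

Lemma pw3 q : (((p3 q && (qz q == k0)) + (p3 q && (qz q != k0))) = p3 q)%N.
Proof. by case: (p3 q); case: (qz q == k0). Qed.

Lemma sum3 (a b c d : bool) : (a -> d) -> (b -> d) -> (c -> d) ->
  (a -> ~~ b && ~~ c) -> (b -> ~~ c) -> (a + b + c <= d)%N.
Proof.
case: a b c d => [] [] [] [] H1 H2 H3 H4 H5 //;
  by [have := H1 isT | have := H2 isT | have := H3 isT | have := H4 isT | have := H5 isT].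
Qed.

Lemma pw4 q : (((p4 q && (qx q == k0)) + (p4 q && (qz q == k0))
      + (p4 q && (k0 \notin [:: qx q; qy q; qz q; qw q]))) <= p4 q)%N.
Proof.
rewrite /p4; apply: sum3; try by case/andP.
- case/andP => /andP [Hu _] /eqP xk.
  have xz : (qz q == k0) = false.
    apply/negP => /eqP zk; move: Hu; rewrite xk zk /= !inE eqxx /=.
    by rewrite orbT.
  by rewrite xz -xk !inE eqxx /= !andbF.
- by case/andP => _ /eqP zk; rewrite -zk !inE eqxx /= !orbT !andbF.
Qed.
Lemma L1 : (n * n <= #|[set q | p1 q]|)%N.
Proof.
pose f := fun p : 'I_n * 'I_n => (p.1, p.2, p.1, p.2) : Q4.
have inj : injective f by case=> a b [c d] [-> ->].
apply: (@leq_trans #|f @: [set: 'I_n * 'I_n]|).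
  by rewrite card_imset // cardsT; apply: eq_leq; rewrite -mxvec_cast.
apply: subset_leq_card; apply/subsetP => q /imsetP [[a b] _ ->].
by rewrite inE /p1 /= !eqxx.
Qed.

Lemma L2 : (n * n - n <= #|[set q | p2 q]|)%N.
Proof.
pose D := [set p : 'I_n * 'I_n | p.1 != p.2].
have HD : (n * n - n <= #|D|)%N.
  rewrite cardsCs -mxvec_cast leq_sub2l //.
  apply: (@leq_trans #|(fun x : 'I_n => (x, x)) @: [set: 'I_n]|).
    apply: subset_leq_card; apply/subsetP => [[a b]]; rewrite !inE negbK /= => /eqP ->.
    by apply/imsetP; exists b; rewrite ?inE.
  by apply: leq_trans (leq_imset_card _ _) _; rewrite cardsT card_ord.
pose f := fun p : 'I_n * 'I_n => (p.1, p.2, p.2, p.1) : Q4.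
have inj : injective f by case=> a b [c d] [-> ->].
apply: (leq_trans HD); rewrite -(card_imset _ inj).
apply: subset_leq_card; apply/subsetP => q /imsetP [[a b] Hab ->].
by rewrite inE /= in Hab; rewrite inE /p2 /qx /qy /qz /qw /= !eqxx Hab.
Qed.

Lemma energy_lb : (n * n + (n * n - n) + (#|SQ3z| + #|SQ3nz|)
   + (#|SQ4x| + #|SQ4z| + #|SQ4no|) <= energy A)%N.
Proof.
rewrite energy_sum.
have E3 : (#|SQ3z| + #|SQ3nz| = \sum_q p3 q)%N.
  by rewrite /SQ3z /SQ3nz !card_sum -big_split; apply: eq_bigr => q _; apply: pw3.
have E4 : (#|SQ4x| + #|SQ4z| + #|SQ4no| <= \sum_q p4 q)%N.
  by rewrite /SQ4x /SQ4z /SQ4no !card_sum -!big_split; apply: leq_sum => q _; apply: pw4.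
rewrite E3; apply: (leq_trans (leq_add (leq_add (leq_add L1 L2) (leqnn _)) E4)).
rewrite !card_sum -!big_split /=; apply: leq_sum => q _; exact: pw1.
Qed.
Lemma inj_card k (T : {set k.-tuple 'I_n}) (Q : {set Q4}) (phi : k.-tuple 'I_n -> Q4) :
  (forall v, v \in T -> phi v \in Q) -> {in T &, injective phi} -> (#|T| <= #|Q|)%N.
Proof.
move=> H inj; rewrite -(card_in_imset inj); apply: subset_leq_card.
by apply/subsetP => q /imsetP [v Hv ->]; apply: H.
Qed.

Lemma tup_ext k (v v' : k.-tuple 'I_n) : (forall i, (i < k)%N -> w v i = w v' i) -> v = v'.
Proof.
move=> H; apply: val_inj; apply: (@eq_from_nth _ ord0); first by rewrite !size_tuple.
by move=> i Hi; apply: H; rewrite size_tuple in Hi.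
Qed.

Lemma wne k (v : k.-tuple 'I_n) i j : uniq v -> (i < k)%N -> (j < k)%N -> i != j -> w v i != w v j.
Proof. by move=> U Hi Hj; rewrite /w nth_uniq ?size_tuple. Qed.

Ltac uniq_tac U := rewrite /= ?inE ?negb_or ?andbT; repeat (apply/andP; split); by apply: (wne U).

Lemma injB1 : (#|Tset 4 0 1 2 3 true| <= #|SQ4z|)%N.
Proof.
apply: (@inj_card _ _ _ (fun v => (w v 1, w v 2, w v 0, w v 3))).
  move=> v; rewrite !inE /Pg /p4 /qx /qy /qz /qw /Cq /= => /andP [/andP [/eqP H0 /eqP H] U].
  apply/andP; split; last by rewrite H0.
  by apply/andP; split; [uniq_tac U | apply/eqP; lra].
move=> v v'; rewrite !inE => /andP [/andP [/eqP H0 _] _] /andP [/andP [/eqP H0' _] _] [E1 E2 E3 E4].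
apply: tup_ext; case=> [|[|[|[|i]]]] //.
Qed.

Ltac inj_tac :=
  let v := fresh "v" in let v' := fresh "v'" in let H1 := fresh "H1" in
  let H2 := fresh "H2" in let E := fresh "E" in
  intros v v' H1 H2 E; injection E; intros; rewrite !inE in H1 H2;
  move/andP: H1 => [/andP [/eqP ? _] _]; move/andP: H2 => [/andP [/eqP ? _] _];
  apply: tup_ext; case=> [|[|[|[|[|?]]]]] //; congruence.

Lemma injB2 : (#|Tset 4 0 1 2 3 false| <= #|SQ4x|)%N.
Proof.
apply: (@inj_card _ _ _ (fun v => (w v 0, w v 2, w v 1, w v 3))); last by inj_tac.
move=> v; rewrite !inE /Pg /p4 /qx /qy /qz /qw /Cq /= => /andP [/andP [/eqP H0 /eqP H] U].
apply/andP; split; last by rewrite H0.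
by apply/andP; split; [uniq_tac U | apply/eqP; lra].
Qed.

Lemma injD1 : (#|Tset 5 1 2 3 4 true| <= #|SQ4no|)%N.
Proof.
apply: (@inj_card _ _ _ (fun v => (w v 2, w v 3, w v 1, w v 4))); last by inj_tac.
move=> v; rewrite !inE /Pg /p4 /qx /qy /qz /qw /Cq /= => /andP [/andP [/eqP H0 /eqP H] U].
apply/andP; split.
  by apply/andP; split; [uniq_tac U | apply/eqP; lra].
rewrite -H0; uniq_tac U.
Qed.

Lemma injD2 : (#|Tset 5 1 2 3 4 false| <= #|SQ4no|)%N.
Proof.
apply: (@inj_card _ _ _ (fun v => (w v 2, w v 4, w v 1, w v 3))); last by inj_tac.
move=> v; rewrite !inE /Pg /p4 /qx /qy /qz /qw /Cq /= => /andP [/andP [/eqP H0 /eqP H] U].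
apply/andP; split.
  by apply/andP; split; [uniq_tac U | apply/eqP; lra].
rewrite -H0; uniq_tac U.
Qed.

Lemma injA1 : (#|Tset 3 0 1 1 2 true| <= #|SQ3z|)%N.
Proof.
apply: (@inj_card _ _ _ (fun v => (w v 1, w v 1, w v 0, w v 2))); last by inj_tac.
move=> v; rewrite !inE /Pg /p3 /qx /qy /qz /qw /Cq /= => /andP [/andP [/eqP H0 /eqP H] U].
apply/andP; split; last by rewrite H0.
by rewrite eqxx /=; apply/andP; split; [uniq_tac U | apply/eqP; lra].
Qed.

Lemma injC1 : (#|Tset 4 1 2 2 3 true| <= #|SQ3nz|)%N.
Proof.
apply: (@inj_card _ _ _ (fun v => (w v 2, w v 2, w v 1, w v 3))); last by inj_tac.
move=> v; rewrite !inE /Pg /p3 /qx /qy /qz /qw /Cq /= => /andP [/andP [/eqP H0 /eqP H] U].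
apply/andP; split; last by rewrite -H0; apply: (wne U).
by rewrite eqxx /=; apply/andP; split; [uniq_tac U | apply/eqP; lra].
Qed.

Lemma emptyA2 : #|Tset 3 0 1 1 2 false| = 0%N.
Proof.
apply/eqP; rewrite cards_eq0; apply/eqP/setP => v; rewrite !inE /Pg /=.
apply/negbTE/negP => /andP [/andP [_ /eqP H] U].
have : Af (w v 0) = Af (w v 2) by lra.
by move/Af_inj/eqP; apply/negP; apply: (wne U).
Qed.

Lemma emptyC2 : #|Tset 4 1 2 2 3 false| = 0%N.
Proof.
apply/eqP; rewrite cards_eq0; apply/eqP/setP => v; rewrite !inE /Pg /=.
apply/negbTE/negP => /andP [/andP [_ /eqP H] U].
have : Af (w v 1) = Af (w v 3) by lra.
by move/Af_inj/eqP; apply/negP; apply: (wne U).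
Qed.
Lemma core : (7 <= N)%N -> ((energy A)%:R : R) < 5%:R / 2%:R * ((n ^ 2)%N)%:R ->
  exists s : 'S_n, s ord0 = k0 /\ forall e f, (e < f)%N -> (f < N)%N -> G s e != G s f.
Proof.
move=> HN HE.
case: (boolP [exists s : 'S_n, (s ord0 == k0) &&
     [forall e : 'I_N, forall f : 'I_N, (e < f)%N ==> (G s e != G s f)]]).
  case/existsP => s /andP [/eqP s0 /forallP H]; exists s; split => // e f ef fN.
  have eN : (e < N)%N by lia.
  by have := H (Ordinal eN); move/forallP => /(_ (Ordinal fN)); rewrite /= ef.
move=> Hno; exfalso.
have Hbad : forall s : 'S_n, s ord0 = k0 ->
    exists e f, [/\ (e < f)%N, (f < N)%N & G s e = G s f].
  move=> s s0; move/existsPn: Hno => /(_ s); rewrite s0 eqxx /=.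
  case/forallPn => e /forallPn [f]; rewrite negb_imply negbK => /andP [ef /eqP Ge].
  by exists e, f; split.
have H1 := fact_le_sum Hbad.
have N2 : (2 <= N)%N by lia.
have H2 := @sum_pos N cnt _ _ _ _ N2 (cntA N2) (@cntB) (@cntC) (@cntD).
have H3 := energy_lb.
have iA1 := injA1; have iC1 := injC1; have iB1 := injB1; have iB2 := injB2.
have iD1 := injD1; have iD2 := injD2; have eA2 := emptyA2; have eC2 := emptyC2.
rewrite eA2 eC2 !addn0 in H2.
have HE' : (2 * energy A < 5 * n ^ 2)%N.
  rewrite -(ltr_nat R) !natrM; move: HE; set x := (energy A)%:R; set y := (n ^ 2)%:R.
  lra.
have eF2 : ((N - 2)`! = (N - 2) * (N - 3)`!)%N.
  by have -> : (N - 2 = (N - 3).+1)%N by lia; rewrite factS.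
have eF1 : ((N - 3)`! = (N - 3) * (N - 4)`!)%N.
  by have -> : (N - 3 = (N - 4).+1)%N by lia; rewrite factS.
have eFN : (N`! = N * (N - 1) * (N - 2)`!)%N.
  have e1 : (N - 1).+1 = N by lia.
  have e2 : (N - 2).+1 = (N - 1)%N by lia.
  by rewrite -{1}e1 factS -e2 factS e2 mulnA e1.
have eC : ('C(N - 2, 2) * 2 * (N - 4)`! = (N - 2)`!)%N.
  have := @bin_fact (N - 2) 2; rewrite /= (_ : N - 2 - 2 = N - 4)%N; last by lia.
  by move=> <-; [rewrite mulnA | lia].
have F0pos : (0 < (N - 4)`!)%N by apply: fact_gt0.
have F2pos : (0 < (N - 2)`!)%N by apply: fact_gt0.
move: H1 H2 H3 iA1 iC1 iB1 iB2 iD1 iD2 HE' eF2 eF1 eFN eC F0pos F2pos.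
move: (\sum_(0 <= f < N) _) => S.
move: #|Tset 3 0 1 1 2 true| => TA1.
move: #|Tset 4 1 2 2 3 true| => TC1.
move: #|Tset 4 0 1 2 3 true| => TB1.
move: #|Tset 4 0 1 2 3 false| => TB2.
move: #|Tset 5 1 2 3 4 true| => TD1.
move: #|Tset 5 1 2 3 4 false| => TD2.
move: #|SQ3z| #|SQ3nz| #|SQ4x| #|SQ4z| #|SQ4no| (energy A) => a b c d e E.
move: (N - 2)%N`! (N - 3)%N`! (N - 4)%N`! 'C(N - 2, 2) => F2 F1 F0 C.
move: N`! => FN.
move=> H1 H2 H3 iA1 iC1 iB1 iB2 iD1 iD2 HE' eF2 eF1 eFN eC F0pos F2pos.
have Q1 : ((N - 2) * ((TB1 + TB2) * F1 + TC1 * F1) = (TB1 + TB2 + TC1) * F2)%N.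
  by rewrite eF2; ring.
have Q2 : (2 * (C * ((TD1 + TD2) * F0)) = (TD1 + TD2) * F2)%N.
  by rewrite -eC; ring.
have K1 : (2 * S <= F2 * (2 * TA1 + 2 * (TB1 + TB2 + TC1) + (TD1 + TD2)))%N.
  apply: leq_trans (_ : 2 * (TA1 * F2 + (N - 2) * ((TB1 + TB2) * F1 + TC1 * F1) +
           C * ((TD1 + TD2) * F0)) <= _)%N.
    by rewrite leq_mul2l.
  have -> : (F2 * (2 * TA1 + 2 * (TB1 + TB2 + TC1) + (TD1 + TD2)) =
     2 * TA1 * F2 + 2 * ((TB1 + TB2 + TC1) * F2) + (TD1 + TD2) * F2)%N by ring.
  by rewrite Q1 -Q2; apply: eq_leq; ring.
have K2 : (2 * TA1 + 2 * (TB1 + TB2 + TC1) + (TD1 + TD2) <= 2 * (a + b + c + d + e))%N by lia.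
have K3 : (2 * (N * (N - 1)) * F2 <= 2 * (a + b + c + d + e) * F2)%N.
  rewrite -mulnA -eFN; apply: (@leq_trans (2 * S)); first by rewrite leq_mul2l H1 orbT.
  by apply: leq_trans K1 _; rewrite [X in (_ <= X)%N]mulnC leq_mul2l K2 orbT.
rewrite leq_pmul2r // in K3.
nia.
Qed.
End Main.
Section Small.
Variable R : realType.
Local Open Scope ring_scope.

Lemma nd (x y : R) : x < y -> `|y - x| = y - x.
Proof. by move=> h; rewrite gtr0_norm // subr_gt0. Qed.
Lemma nd' (x y : R) : x < y -> `|x - y| = y - x.
Proof. by move=> h; rewrite distrC nd. Qed.

Lemma perm_idx (bs : seq R) (idx : seq nat) :
  perm_eq idx (iota 0 (size bs)) -> perm_eq (map (nth 0 bs) idx) bs.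
Proof.
move=> H; have := perm_map (nth 0 bs) H.
by rewrite -/(mkseq _ _) mkseq_nth.
Qed.

Ltac neq_tac := apply/eqP => E; first [ lra |
  match goal with H : is_true (_ != _) |- _ => move/eqP: H; apply; lra end ].
Lemma uq_cons (x : R) s : x \notin s -> uniq s -> uniq (x :: s).
Proof. by move=> h1 h2; rewrite /= h1 h2. Qed.
Lemma nin_cons (x y : R) s : x != y -> x \notin s -> x \notin y :: s.
Proof. by move=> h1 h2; rewrite inE negb_or h1 h2. Qed.
Lemma nin_nil (x : R) : x \notin [::].
Proof. by []. Qed.
Ltac uniq_small := repeat (first [ exact: nin_nil | apply: nin_cons | apply: uq_cons | done ]).

Lemma subin1 (x y z w : R) : x < z -> w <= y -> w - z < y - x.
Proof. by move=> h1 h2; lra. Qed.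
Lemma subin2 (x y z w : R) : x <= z -> w < y -> w - z < y - x.
Proof. by move=> h1 h2; lra. Qed.
Lemma small1 (b0 : R) : forall a, a \in [:: b0] ->
  exists t, perm_eq (a :: t) [:: b0] /\ uniq (gaps a t).
Proof.
move=>  a; rewrite !inE.
move/eqP ->.
{ exists [:: ]; split; first by apply: (perm_idx (idx := [:: 0])).
  rewrite /gaps /=.
  uniq_small. }
Qed.

Lemma small2 (b0 b1 : R) : b0 < b1 -> forall a, a \in [:: b0; b1] ->
  exists t, perm_eq (a :: t) [:: b0; b1] /\ uniq (gaps a t).
Proof.
move=> h0_1 a; rewrite !inE.
case/orP => [/eqP ->|].
{ exists [:: b1]; split; first by apply: (perm_idx (idx := [:: 0; 1])).
  rewrite /gaps /=.
  rewrite ?(nd h0_1).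
  uniq_small. }
move/eqP ->.
{ exists [:: b0]; split; first by apply: (perm_idx (idx := [:: 1; 0])).
  rewrite /gaps /=.
  rewrite ?(nd' h0_1).
  uniq_small. }
Qed.

Lemma small3 (b0 b1 b2 : R) : b0 < b1 -> b1 < b2 -> forall a, a \in [:: b0; b1; b2] ->
  exists t, perm_eq (a :: t) [:: b0; b1; b2] /\ uniq (gaps a t).
Proof.
move=> h0_1 h1_2 a; rewrite !inE.
have h0_2 := lt_trans h0_1 h1_2.
case/orP => [/eqP ->|].
{ exists [:: b2; b1]; split; first by apply: (perm_idx (idx := [:: 0; 2; 1])).
  rewrite /gaps /=.
  rewrite ?(nd h0_2).
  rewrite ?(nd' h1_2).
  have P1 : b2 - b0 != b2 - b1 by rewrite (gt_eqF (subin1 h0_1 (lexx _))).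
  uniq_small. }
case/orP => [/eqP ->|].
{ exists [:: b0; b2]; split; first by apply: (perm_idx (idx := [:: 1; 0; 2])).
  rewrite /gaps /=.
  rewrite ?(nd' h0_1).
  rewrite ?(nd h0_2).
  have P1 : b1 - b0 != b2 - b0 by rewrite (lt_eqF (subin2 (lexx _) h1_2)).
  uniq_small. }
move/eqP ->.
{ exists [:: b0; b1]; split; first by apply: (perm_idx (idx := [:: 2; 0; 1])).
  rewrite /gaps /=.
  rewrite ?(nd' h0_2).
  rewrite ?(nd h0_1).
  have P1 : b2 - b0 != b1 - b0 by rewrite (gt_eqF (subin2 (lexx _) h1_2)).
  uniq_small. }
Qed.

Lemma small4 (b0 b1 b2 b3 : R) : b0 < b1 -> b1 < b2 -> b2 < b3 -> forall a, a \in [:: b0; b1; b2; b3] ->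
  exists t, perm_eq (a :: t) [:: b0; b1; b2; b3] /\ uniq (gaps a t).
Proof.
move=> h0_1 h1_2 h2_3 a; rewrite !inE.
have h0_2 := lt_trans h0_1 h1_2.
have h1_3 := lt_trans h1_2 h2_3.
have h0_3 := lt_trans h0_2 h2_3.
case/orP => [/eqP ->|].
{ exists [:: b3; b1; b2]; split; first by apply: (perm_idx (idx := [:: 0; 3; 1; 2])).
  rewrite /gaps /=.
  rewrite ?(nd h0_3).
  rewrite ?(nd' h1_3).
  rewrite ?(nd h1_2).
  have P1 : b3 - b0 != b3 - b1 by rewrite (gt_eqF (subin1 h0_1 (lexx _))).
  have P2 : b3 - b0 != b2 - b1 by rewrite (gt_eqF (subin1 h0_1 (ltW h2_3))).
  have P3 : b3 - b1 != b2 - b1 by rewrite (gt_eqF (subin2 (lexx _) h2_3)).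
  uniq_small. }
case/orP => [/eqP ->|].
{ exists [:: b2; b0; b3]; split; first by apply: (perm_idx (idx := [:: 1; 2; 0; 3])).
  rewrite /gaps /=.
  rewrite ?(nd h1_2).
  rewrite ?(nd' h0_2).
  rewrite ?(nd h0_3).
  have P1 : b2 - b1 != b2 - b0 by rewrite (lt_eqF (subin1 h0_1 (lexx _))).
  have P2 : b2 - b1 != b3 - b0 by rewrite (lt_eqF (subin1 h0_1 (ltW h2_3))).
  have P3 : b2 - b0 != b3 - b0 by rewrite (lt_eqF (subin2 (lexx _) h2_3)).
  uniq_small. }
case/orP => [/eqP ->|].
{ exists [:: b1; b3; b0]; split; first by apply: (perm_idx (idx := [:: 2; 1; 3; 0])).
  rewrite /gaps /=.
  rewrite ?(nd' h1_2).
  rewrite ?(nd h1_3).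
  rewrite ?(nd' h0_3).
  have P1 : b2 - b1 != b3 - b1 by rewrite (lt_eqF (subin2 (lexx _) h2_3)).
  have P2 : b2 - b1 != b3 - b0 by rewrite (lt_eqF (subin1 h0_1 (ltW h2_3))).
  have P3 : b3 - b1 != b3 - b0 by rewrite (lt_eqF (subin1 h0_1 (lexx _))).
  uniq_small. }
move/eqP ->.
{ exists [:: b0; b2; b1]; split; first by apply: (perm_idx (idx := [:: 3; 0; 2; 1])).
  rewrite /gaps /=.
  rewrite ?(nd' h0_3).
  rewrite ?(nd h0_2).
  rewrite ?(nd' h1_2).
  have P1 : b3 - b0 != b2 - b0 by rewrite (gt_eqF (subin2 (lexx _) h2_3)).
  have P2 : b3 - b0 != b2 - b1 by rewrite (gt_eqF (subin1 h0_1 (ltW h2_3))).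
  have P3 : b2 - b0 != b2 - b1 by rewrite (gt_eqF (subin1 h0_1 (lexx _))).
  uniq_small. }
Qed.

Lemma small5 (b0 b1 b2 b3 b4 : R) : b0 < b1 -> b1 < b2 -> b2 < b3 -> b3 < b4 -> forall a, a \in [:: b0; b1; b2; b3; b4] ->
  exists t, perm_eq (a :: t) [:: b0; b1; b2; b3; b4] /\ uniq (gaps a t).
Proof.
move=> h0_1 h1_2 h2_3 h3_4 a; rewrite !inE.
have h0_2 := lt_trans h0_1 h1_2.
have h1_3 := lt_trans h1_2 h2_3.
have h2_4 := lt_trans h2_3 h3_4.
have h0_3 := lt_trans h0_2 h2_3.
have h1_4 := lt_trans h1_3 h3_4.
have h0_4 := lt_trans h0_3 h3_4.
case/orP => [/eqP ->|].
{ exists [:: b4; b1; b3; b2]; split; first by apply: (perm_idx (idx := [:: 0; 4; 1; 3; 2])).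
  rewrite /gaps /=.
  rewrite ?(nd h0_4).
  rewrite ?(nd' h1_4).
  rewrite ?(nd h1_3).
  rewrite ?(nd' h2_3).
  have P1 : b4 - b0 != b4 - b1 by rewrite (gt_eqF (subin1 h0_1 (lexx _))).
  have P2 : b4 - b0 != b3 - b1 by rewrite (gt_eqF (subin1 h0_1 (ltW h3_4))).
  have P3 : b4 - b0 != b3 - b2 by rewrite (gt_eqF (subin1 h0_2 (ltW h3_4))).
  have P4 : b4 - b1 != b3 - b1 by rewrite (gt_eqF (subin2 (lexx _) h3_4)).
  have P5 : b4 - b1 != b3 - b2 by rewrite (gt_eqF (subin1 h1_2 (ltW h3_4))).
  have P6 : b3 - b1 != b3 - b2 by rewrite (gt_eqF (subin1 h1_2 (lexx _))).
  uniq_small. }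
case/orP => [/eqP ->|].
{ case: (eqVneq ((b2 - b1)) ((b3 - b2))) => H1.
  { case: (eqVneq ((b4 - b3)) ((b1 - b0) + (b2 - b1))) => H2.
    { exists [:: b3; b2; b4; b0]; split; first by apply: (perm_idx (idx := [:: 1; 3; 2; 4; 0])).
      rewrite /gaps /=.
      rewrite ?(nd h1_3).
      rewrite ?(nd' h2_3).
      rewrite ?(nd h2_4).
      rewrite ?(nd' h0_4).
      have P2 : b3 - b1 != b4 - b2 by apply/eqP => E; clear -E h0_1 h1_2 h2_3 h3_4 H1 H2; lra.
      have P1 : b3 - b1 != b3 - b2 by rewrite (gt_eqF (subin1 h1_2 (lexx _))).
      have P3 : b3 - b1 != b4 - b0 by rewrite (lt_eqF (subin1 h0_1 (ltW h3_4))).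
      have P4 : b3 - b2 != b4 - b2 by rewrite (lt_eqF (subin2 (lexx _) h3_4)).
      have P5 : b3 - b2 != b4 - b0 by rewrite (lt_eqF (subin1 h0_2 (ltW h3_4))).
      have P6 : b4 - b2 != b4 - b0 by rewrite (lt_eqF (subin1 h0_2 (lexx _))).
      uniq_small. }
    { exists [:: b2; b4; b0; b3]; split; first by apply: (perm_idx (idx := [:: 1; 2; 4; 0; 3])).
      rewrite /gaps /=.
      rewrite ?(nd h1_2).
      rewrite ?(nd h2_4).
      rewrite ?(nd' h0_4).
      rewrite ?(nd h0_3).
      have P1 : b2 - b1 != b4 - b2 by apply/eqP => E; clear -E h0_1 h1_2 h2_3 h3_4 H1; lra.
      have P5 : b4 - b2 != b3 - b0 by apply/eqP => E; move/eqP: H2; apply; clear -E h0_1 h1_2 h2_3 h3_4 H1; lra.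
      have P2 : b2 - b1 != b4 - b0 by rewrite (lt_eqF (subin1 h0_1 (ltW h2_4))).
      have P3 : b2 - b1 != b3 - b0 by rewrite (lt_eqF (subin1 h0_1 (ltW h2_3))).
      have P4 : b4 - b2 != b4 - b0 by rewrite (lt_eqF (subin1 h0_2 (lexx _))).
      have P6 : b4 - b0 != b3 - b0 by rewrite (gt_eqF (subin2 (lexx _) h3_4)).
      uniq_small. } }
  { exists [:: b2; b3; b0; b4]; split; first by apply: (perm_idx (idx := [:: 1; 2; 3; 0; 4])).
    rewrite /gaps /=.
    rewrite ?(nd h1_2).
    rewrite ?(nd h2_3).
    rewrite ?(nd' h0_3).
    rewrite ?(nd h0_4).
    have P1 : b2 - b1 != b3 - b2 by apply/eqP => E; move/eqP: H1; apply; clear -E h0_1 h1_2 h2_3 h3_4; lra.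
    have P2 : b2 - b1 != b3 - b0 by rewrite (lt_eqF (subin1 h0_1 (ltW h2_3))).
    have P3 : b2 - b1 != b4 - b0 by rewrite (lt_eqF (subin1 h0_1 (ltW h2_4))).
    have P4 : b3 - b2 != b3 - b0 by rewrite (lt_eqF (subin1 h0_2 (lexx _))).
    have P5 : b3 - b2 != b4 - b0 by rewrite (lt_eqF (subin1 h0_2 (ltW h3_4))).
    have P6 : b3 - b0 != b4 - b0 by rewrite (lt_eqF (subin2 (lexx _) h3_4)).
    uniq_small. } }
case/orP => [/eqP ->|].
{ exists [:: b1; b3; b0; b4]; split; first by apply: (perm_idx (idx := [:: 2; 1; 3; 0; 4])).
  rewrite /gaps /=.
  rewrite ?(nd' h1_2).
  rewrite ?(nd h1_3).
  rewrite ?(nd' h0_3).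
  rewrite ?(nd h0_4).
  have P1 : b2 - b1 != b3 - b1 by rewrite (lt_eqF (subin2 (lexx _) h2_3)).
  have P2 : b2 - b1 != b3 - b0 by rewrite (lt_eqF (subin1 h0_1 (ltW h2_3))).
  have P3 : b2 - b1 != b4 - b0 by rewrite (lt_eqF (subin1 h0_1 (ltW h2_4))).
  have P4 : b3 - b1 != b3 - b0 by rewrite (lt_eqF (subin1 h0_1 (lexx _))).
  have P5 : b3 - b1 != b4 - b0 by rewrite (lt_eqF (subin1 h0_1 (ltW h3_4))).
  have P6 : b3 - b0 != b4 - b0 by rewrite (lt_eqF (subin2 (lexx _) h3_4)).
  uniq_small. }
case/orP => [/eqP ->|].
{ case: (eqVneq ((b1 - b0)) ((b4 - b3))) => H3.
  { case: (eqVneq ((b3 - b2) + (b4 - b3)) ((b2 - b1))) => H4.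
    { exists [:: b1; b0; b4; b2]; split; first by apply: (perm_idx (idx := [:: 3; 1; 0; 4; 2])).
      rewrite /gaps /=.
      rewrite ?(nd' h1_3).
      rewrite ?(nd' h0_1).
      rewrite ?(nd h0_4).
      rewrite ?(nd' h2_4).
      have P1 : b3 - b1 != b1 - b0 by apply/eqP => E; clear -E h0_1 h1_2 h2_3 h3_4 H3 H4; lra.
      have P3 : b3 - b1 != b4 - b2 by apply/eqP => E; clear -E h0_1 h1_2 h2_3 h3_4 H3 H4; lra.
      have P5 : b1 - b0 != b4 - b2 by apply/eqP => E; clear -E h0_1 h1_2 h2_3 h3_4 H3 H4; lra.
      have P2 : b3 - b1 != b4 - b0 by rewrite (lt_eqF (subin1 h0_1 (ltW h3_4))).
      have P4 : b1 - b0 != b4 - b0 by rewrite (lt_eqF (subin2 (lexx _) h1_4)).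
      have P6 : b4 - b0 != b4 - b2 by rewrite (gt_eqF (subin1 h0_2 (lexx _))).
      uniq_small. }
    { exists [:: b0; b4; b2; b1]; split; first by apply: (perm_idx (idx := [:: 3; 0; 4; 2; 1])).
      rewrite /gaps /=.
      rewrite ?(nd' h0_3).
      rewrite ?(nd h0_4).
      rewrite ?(nd' h2_4).
      rewrite ?(nd' h1_2).
      have P2 : b3 - b0 != b4 - b2 by apply/eqP => E; clear -E h0_1 h1_2 h2_3 h3_4 H3; lra.
      have P6 : b4 - b2 != b2 - b1 by apply/eqP => E; move/eqP: H4; apply; clear -E h0_1 h1_2 h2_3 h3_4 H3; lra.
      have P1 : b3 - b0 != b4 - b0 by rewrite (lt_eqF (subin2 (lexx _) h3_4)).
      have P3 : b3 - b0 != b2 - b1 by rewrite (gt_eqF (subin1 h0_1 (ltW h2_3))).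
      have P4 : b4 - b0 != b4 - b2 by rewrite (gt_eqF (subin1 h0_2 (lexx _))).
      have P5 : b4 - b0 != b2 - b1 by rewrite (gt_eqF (subin1 h0_1 (ltW h2_4))).
      uniq_small. } }
  { exists [:: b0; b4; b1; b2]; split; first by apply: (perm_idx (idx := [:: 3; 0; 4; 1; 2])).
    rewrite /gaps /=.
    rewrite ?(nd' h0_3).
    rewrite ?(nd h0_4).
    rewrite ?(nd' h1_4).
    rewrite ?(nd h1_2).
    have P2 : b3 - b0 != b4 - b1 by apply/eqP => E; move/eqP: H3; apply; clear -E h0_1 h1_2 h2_3 h3_4; lra.
    have P1 : b3 - b0 != b4 - b0 by rewrite (lt_eqF (subin2 (lexx _) h3_4)).
    have P3 : b3 - b0 != b2 - b1 by rewrite (gt_eqF (subin1 h0_1 (ltW h2_3))).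
    have P4 : b4 - b0 != b4 - b1 by rewrite (gt_eqF (subin1 h0_1 (lexx _))).
    have P5 : b4 - b0 != b2 - b1 by rewrite (gt_eqF (subin1 h0_1 (ltW h2_4))).
    have P6 : b4 - b1 != b2 - b1 by rewrite (gt_eqF (subin2 (lexx _) h2_4)).
    uniq_small. } }
move/eqP ->.
{ exists [:: b0; b3; b1; b2]; split; first by apply: (perm_idx (idx := [:: 4; 0; 3; 1; 2])).
  rewrite /gaps /=.
  rewrite ?(nd' h0_4).
  rewrite ?(nd h0_3).
  rewrite ?(nd' h1_3).
  rewrite ?(nd h1_2).
  have P1 : b4 - b0 != b3 - b0 by rewrite (gt_eqF (subin2 (lexx _) h3_4)).
  have P2 : b4 - b0 != b3 - b1 by rewrite (gt_eqF (subin1 h0_1 (ltW h3_4))).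
  have P3 : b4 - b0 != b2 - b1 by rewrite (gt_eqF (subin1 h0_1 (ltW h2_4))).
  have P4 : b3 - b0 != b3 - b1 by rewrite (gt_eqF (subin1 h0_1 (lexx _))).
  have P5 : b3 - b0 != b2 - b1 by rewrite (gt_eqF (subin1 h0_1 (ltW h2_3))).
  have P6 : b3 - b1 != b2 - b1 by rewrite (gt_eqF (subin2 (lexx _) h2_3)).
  uniq_small. }
Qed.

Lemma small6 (b0 b1 b2 b3 b4 b5 : R) : b0 < b1 -> b1 < b2 -> b2 < b3 -> b3 < b4 -> b4 < b5 -> forall a, a \in [:: b0; b1; b2; b3; b4; b5] ->
  exists t, perm_eq (a :: t) [:: b0; b1; b2; b3; b4; b5] /\ uniq (gaps a t).
Proof.
move=> h0_1 h1_2 h2_3 h3_4 h4_5 a; rewrite !inE.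
have h0_2 := lt_trans h0_1 h1_2.
have h1_3 := lt_trans h1_2 h2_3.
have h2_4 := lt_trans h2_3 h3_4.
have h3_5 := lt_trans h3_4 h4_5.
have h0_3 := lt_trans h0_2 h2_3.
have h1_4 := lt_trans h1_3 h3_4.
have h2_5 := lt_trans h2_4 h4_5.
have h0_4 := lt_trans h0_3 h3_4.
have h1_5 := lt_trans h1_4 h4_5.
have h0_5 := lt_trans h0_4 h4_5.
case/orP => [/eqP ->|].
{ exists [:: b5; b1; b4; b2; b3]; split; first by apply: (perm_idx (idx := [:: 0; 5; 1; 4; 2; 3])).
  rewrite /gaps /=.
  rewrite ?(nd h0_5).
  rewrite ?(nd' h1_5).
  rewrite ?(nd h1_4).
  rewrite ?(nd' h2_4).
  rewrite ?(nd h2_3).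
  have P1 : b5 - b0 != b5 - b1 by rewrite (gt_eqF (subin1 h0_1 (lexx _))).
  have P2 : b5 - b0 != b4 - b1 by rewrite (gt_eqF (subin1 h0_1 (ltW h4_5))).
  have P3 : b5 - b0 != b4 - b2 by rewrite (gt_eqF (subin1 h0_2 (ltW h4_5))).
  have P4 : b5 - b0 != b3 - b2 by rewrite (gt_eqF (subin1 h0_2 (ltW h3_5))).
  have P5 : b5 - b1 != b4 - b1 by rewrite (gt_eqF (subin2 (lexx _) h4_5)).
  have P6 : b5 - b1 != b4 - b2 by rewrite (gt_eqF (subin1 h1_2 (ltW h4_5))).
  have P7 : b5 - b1 != b3 - b2 by rewrite (gt_eqF (subin1 h1_2 (ltW h3_5))).
  have P8 : b4 - b1 != b4 - b2 by rewrite (gt_eqF (subin1 h1_2 (lexx _))).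
  have P9 : b4 - b1 != b3 - b2 by rewrite (gt_eqF (subin1 h1_2 (ltW h3_4))).
  have P10 : b4 - b2 != b3 - b2 by rewrite (gt_eqF (subin2 (lexx _) h3_4)).
  uniq_small. }
case/orP => [/eqP ->|].
{ case: (eqVneq ((b2 - b1)) ((b4 - b3))) => H1.
  { case: (eqVneq ((b5 - b4)) ((b1 - b0) + (b2 - b1))) => H2.
    { exists [:: b5; b0; b3; b2; b4]; split; first by apply: (perm_idx (idx := [:: 1; 5; 0; 3; 2; 4])).
      rewrite /gaps /=.
      rewrite ?(nd h1_5).
      rewrite ?(nd' h0_5).
      rewrite ?(nd h0_3).
      rewrite ?(nd' h2_3).
      rewrite ?(nd h2_4).
      have P2 : b5 - b1 != b3 - b0 by apply/eqP => E; clear -E h0_1 h1_2 h2_3 h3_4 h4_5 H1 H2; lra.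
      have P9 : b3 - b0 != b4 - b2 by apply/eqP => E; clear -E h0_1 h1_2 h2_3 h3_4 h4_5 H1 H2; lra.
      have P1 : b5 - b1 != b5 - b0 by rewrite (lt_eqF (subin1 h0_1 (lexx _))).
      have P3 : b5 - b1 != b3 - b2 by rewrite (gt_eqF (subin1 h1_2 (ltW h3_5))).
      have P4 : b5 - b1 != b4 - b2 by rewrite (gt_eqF (subin1 h1_2 (ltW h4_5))).
      have P5 : b5 - b0 != b3 - b0 by rewrite (gt_eqF (subin2 (lexx _) h3_5)).
      have P6 : b5 - b0 != b3 - b2 by rewrite (gt_eqF (subin1 h0_2 (ltW h3_5))).
      have P7 : b5 - b0 != b4 - b2 by rewrite (gt_eqF (subin1 h0_2 (ltW h4_5))).
      have P8 : b3 - b0 != b3 - b2 by rewrite (gt_eqF (subin1 h0_2 (lexx _))).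
      have P10 : b3 - b2 != b4 - b2 by rewrite (lt_eqF (subin2 (lexx _) h3_4)).
      uniq_small. }
    { exists [:: b3; b2; b5; b0; b4]; split; first by apply: (perm_idx (idx := [:: 1; 3; 2; 5; 0; 4])).
      rewrite /gaps /=.
      rewrite ?(nd h1_3).
      rewrite ?(nd' h2_3).
      rewrite ?(nd h2_5).
      rewrite ?(nd' h0_5).
      rewrite ?(nd h0_4).
      have P2 : b3 - b1 != b5 - b2 by apply/eqP => E; clear -E h0_1 h1_2 h2_3 h3_4 h4_5 H1; lra.
      have P9 : b5 - b2 != b4 - b0 by apply/eqP => E; move/eqP: H2; apply; clear -E h0_1 h1_2 h2_3 h3_4 h4_5 H1; lra.
      have P1 : b3 - b1 != b3 - b2 by rewrite (gt_eqF (subin1 h1_2 (lexx _))).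
      have P3 : b3 - b1 != b5 - b0 by rewrite (lt_eqF (subin1 h0_1 (ltW h3_5))).
      have P4 : b3 - b1 != b4 - b0 by rewrite (lt_eqF (subin1 h0_1 (ltW h3_4))).
      have P5 : b3 - b2 != b5 - b2 by rewrite (lt_eqF (subin2 (lexx _) h3_5)).
      have P6 : b3 - b2 != b5 - b0 by rewrite (lt_eqF (subin1 h0_2 (ltW h3_5))).
      have P7 : b3 - b2 != b4 - b0 by rewrite (lt_eqF (subin1 h0_2 (ltW h3_4))).
      have P8 : b5 - b2 != b5 - b0 by rewrite (lt_eqF (subin1 h0_2 (lexx _))).
      have P10 : b5 - b0 != b4 - b0 by rewrite (gt_eqF (subin2 (lexx _) h4_5)).
      uniq_small. } }
  { exists [:: b3; b2; b4; b0; b5]; split; first by apply: (perm_idx (idx := [:: 1; 3; 2; 4; 0; 5])).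
    rewrite /gaps /=.
    rewrite ?(nd h1_3).
    rewrite ?(nd' h2_3).
    rewrite ?(nd h2_4).
    rewrite ?(nd' h0_4).
    rewrite ?(nd h0_5).
    have P2 : b3 - b1 != b4 - b2 by apply/eqP => E; move/eqP: H1; apply; clear -E h0_1 h1_2 h2_3 h3_4 h4_5; lra.
    have P1 : b3 - b1 != b3 - b2 by rewrite (gt_eqF (subin1 h1_2 (lexx _))).
    have P3 : b3 - b1 != b4 - b0 by rewrite (lt_eqF (subin1 h0_1 (ltW h3_4))).
    have P4 : b3 - b1 != b5 - b0 by rewrite (lt_eqF (subin1 h0_1 (ltW h3_5))).
    have P5 : b3 - b2 != b4 - b2 by rewrite (lt_eqF (subin2 (lexx _) h3_4)).
    have P6 : b3 - b2 != b4 - b0 by rewrite (lt_eqF (subin1 h0_2 (ltW h3_4))).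
    have P7 : b3 - b2 != b5 - b0 by rewrite (lt_eqF (subin1 h0_2 (ltW h3_5))).
    have P8 : b4 - b2 != b4 - b0 by rewrite (lt_eqF (subin1 h0_2 (lexx _))).
    have P9 : b4 - b2 != b5 - b0 by rewrite (lt_eqF (subin1 h0_2 (ltW h4_5))).
    have P10 : b4 - b0 != b5 - b0 by rewrite (lt_eqF (subin2 (lexx _) h4_5)).
    uniq_small. } }
case/orP => [/eqP ->|].
{ exists [:: b3; b1; b4; b0; b5]; split; first by apply: (perm_idx (idx := [:: 2; 3; 1; 4; 0; 5])).
  rewrite /gaps /=.
  rewrite ?(nd h2_3).
  rewrite ?(nd' h1_3).
  rewrite ?(nd h1_4).
  rewrite ?(nd' h0_4).
  rewrite ?(nd h0_5).
  have P1 : b3 - b2 != b3 - b1 by rewrite (lt_eqF (subin1 h1_2 (lexx _))).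
  have P2 : b3 - b2 != b4 - b1 by rewrite (lt_eqF (subin1 h1_2 (ltW h3_4))).
  have P3 : b3 - b2 != b4 - b0 by rewrite (lt_eqF (subin1 h0_2 (ltW h3_4))).
  have P4 : b3 - b2 != b5 - b0 by rewrite (lt_eqF (subin1 h0_2 (ltW h3_5))).
  have P5 : b3 - b1 != b4 - b1 by rewrite (lt_eqF (subin2 (lexx _) h3_4)).
  have P6 : b3 - b1 != b4 - b0 by rewrite (lt_eqF (subin1 h0_1 (ltW h3_4))).
  have P7 : b3 - b1 != b5 - b0 by rewrite (lt_eqF (subin1 h0_1 (ltW h3_5))).
  have P8 : b4 - b1 != b4 - b0 by rewrite (lt_eqF (subin1 h0_1 (lexx _))).
  have P9 : b4 - b1 != b5 - b0 by rewrite (lt_eqF (subin1 h0_1 (ltW h4_5))).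
  have P10 : b4 - b0 != b5 - b0 by rewrite (lt_eqF (subin2 (lexx _) h4_5)).
  uniq_small. }
case/orP => [/eqP ->|].
{ exists [:: b2; b4; b1; b5; b0]; split; first by apply: (perm_idx (idx := [:: 3; 2; 4; 1; 5; 0])).
  rewrite /gaps /=.
  rewrite ?(nd' h2_3).
  rewrite ?(nd h2_4).
  rewrite ?(nd' h1_4).
  rewrite ?(nd h1_5).
  rewrite ?(nd' h0_5).
  have P1 : b3 - b2 != b4 - b2 by rewrite (lt_eqF (subin2 (lexx _) h3_4)).
  have P2 : b3 - b2 != b4 - b1 by rewrite (lt_eqF (subin1 h1_2 (ltW h3_4))).
  have P3 : b3 - b2 != b5 - b1 by rewrite (lt_eqF (subin1 h1_2 (ltW h3_5))).
  have P4 : b3 - b2 != b5 - b0 by rewrite (lt_eqF (subin1 h0_2 (ltW h3_5))).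
  have P5 : b4 - b2 != b4 - b1 by rewrite (lt_eqF (subin1 h1_2 (lexx _))).
  have P6 : b4 - b2 != b5 - b1 by rewrite (lt_eqF (subin1 h1_2 (ltW h4_5))).
  have P7 : b4 - b2 != b5 - b0 by rewrite (lt_eqF (subin1 h0_2 (ltW h4_5))).
  have P8 : b4 - b1 != b5 - b1 by rewrite (lt_eqF (subin2 (lexx _) h4_5)).
  have P9 : b4 - b1 != b5 - b0 by rewrite (lt_eqF (subin1 h0_1 (ltW h4_5))).
  have P10 : b5 - b1 != b5 - b0 by rewrite (lt_eqF (subin1 h0_1 (lexx _))).
  uniq_small. }
case/orP => [/eqP ->|].
{ case: (eqVneq ((b1 - b0)) ((b5 - b4))) => H3.
  { case: (eqVneq ((b4 - b3) + (b5 - b4)) ((b2 - b1))) => H4.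
    { exists [:: b2; b3; b0; b5; b1]; split; first by apply: (perm_idx (idx := [:: 4; 2; 3; 0; 5; 1])).
      rewrite /gaps /=.
      rewrite ?(nd' h2_4).
      rewrite ?(nd h2_3).
      rewrite ?(nd' h0_3).
      rewrite ?(nd h0_5).
      rewrite ?(nd' h1_5).
      have P2 : b4 - b2 != b3 - b0 by apply/eqP => E; clear -E h0_1 h1_2 h2_3 h3_4 h4_5 H3 H4; lra.
      have P9 : b3 - b0 != b5 - b1 by apply/eqP => E; clear -E h0_1 h1_2 h2_3 h3_4 h4_5 H3 H4; lra.
      have P1 : b4 - b2 != b3 - b2 by rewrite (gt_eqF (subin2 (lexx _) h3_4)).
      have P3 : b4 - b2 != b5 - b0 by rewrite (lt_eqF (subin1 h0_2 (ltW h4_5))).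
      have P4 : b4 - b2 != b5 - b1 by rewrite (lt_eqF (subin1 h1_2 (ltW h4_5))).
      have P5 : b3 - b2 != b3 - b0 by rewrite (lt_eqF (subin1 h0_2 (lexx _))).
      have P6 : b3 - b2 != b5 - b0 by rewrite (lt_eqF (subin1 h0_2 (ltW h3_5))).
      have P7 : b3 - b2 != b5 - b1 by rewrite (lt_eqF (subin1 h1_2 (ltW h3_5))).
      have P8 : b3 - b0 != b5 - b0 by rewrite (lt_eqF (subin2 (lexx _) h3_5)).
      have P10 : b5 - b0 != b5 - b1 by rewrite (gt_eqF (subin1 h0_1 (lexx _))).
      uniq_small. }
    { exists [:: b0; b5; b2; b3; b1]; split; first by apply: (perm_idx (idx := [:: 4; 0; 5; 2; 3; 1])).
      rewrite /gaps /=.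
      rewrite ?(nd' h0_4).
      rewrite ?(nd h0_5).
      rewrite ?(nd' h2_5).
      rewrite ?(nd h2_3).
      rewrite ?(nd' h1_3).
      have P2 : b4 - b0 != b5 - b2 by apply/eqP => E; clear -E h0_1 h1_2 h2_3 h3_4 h4_5 H3; lra.
      have P9 : b5 - b2 != b3 - b1 by apply/eqP => E; move/eqP: H4; apply; clear -E h0_1 h1_2 h2_3 h3_4 h4_5 H3; lra.
      have P1 : b4 - b0 != b5 - b0 by rewrite (lt_eqF (subin2 (lexx _) h4_5)).
      have P3 : b4 - b0 != b3 - b2 by rewrite (gt_eqF (subin1 h0_2 (ltW h3_4))).
      have P4 : b4 - b0 != b3 - b1 by rewrite (gt_eqF (subin1 h0_1 (ltW h3_4))).
      have P5 : b5 - b0 != b5 - b2 by rewrite (gt_eqF (subin1 h0_2 (lexx _))).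
      have P6 : b5 - b0 != b3 - b2 by rewrite (gt_eqF (subin1 h0_2 (ltW h3_5))).
      have P7 : b5 - b0 != b3 - b1 by rewrite (gt_eqF (subin1 h0_1 (ltW h3_5))).
      have P8 : b5 - b2 != b3 - b2 by rewrite (gt_eqF (subin2 (lexx _) h3_5)).
      have P10 : b3 - b2 != b3 - b1 by rewrite (lt_eqF (subin1 h1_2 (lexx _))).
      uniq_small. } }
  { exists [:: b0; b5; b1; b3; b2]; split; first by apply: (perm_idx (idx := [:: 4; 0; 5; 1; 3; 2])).
    rewrite /gaps /=.
    rewrite ?(nd' h0_4).
    rewrite ?(nd h0_5).
    rewrite ?(nd' h1_5).
    rewrite ?(nd h1_3).
    rewrite ?(nd' h2_3).
    have P2 : b4 - b0 != b5 - b1 by apply/eqP => E; move/eqP: H3; apply; clear -E h0_1 h1_2 h2_3 h3_4 h4_5; lra.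
    have P1 : b4 - b0 != b5 - b0 by rewrite (lt_eqF (subin2 (lexx _) h4_5)).
    have P3 : b4 - b0 != b3 - b1 by rewrite (gt_eqF (subin1 h0_1 (ltW h3_4))).
    have P4 : b4 - b0 != b3 - b2 by rewrite (gt_eqF (subin1 h0_2 (ltW h3_4))).
    have P5 : b5 - b0 != b5 - b1 by rewrite (gt_eqF (subin1 h0_1 (lexx _))).
    have P6 : b5 - b0 != b3 - b1 by rewrite (gt_eqF (subin1 h0_1 (ltW h3_5))).
    have P7 : b5 - b0 != b3 - b2 by rewrite (gt_eqF (subin1 h0_2 (ltW h3_5))).
    have P8 : b5 - b1 != b3 - b1 by rewrite (gt_eqF (subin2 (lexx _) h3_5)).
    have P9 : b5 - b1 != b3 - b2 by rewrite (gt_eqF (subin1 h1_2 (ltW h3_5))).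
    have P10 : b3 - b1 != b3 - b2 by rewrite (gt_eqF (subin1 h1_2 (lexx _))).
    uniq_small. } }
move/eqP ->.
{ exists [:: b0; b4; b1; b3; b2]; split; first by apply: (perm_idx (idx := [:: 5; 0; 4; 1; 3; 2])).
  rewrite /gaps /=.
  rewrite ?(nd' h0_5).
  rewrite ?(nd h0_4).
  rewrite ?(nd' h1_4).
  rewrite ?(nd h1_3).
  rewrite ?(nd' h2_3).
  have P1 : b5 - b0 != b4 - b0 by rewrite (gt_eqF (subin2 (lexx _) h4_5)).
  have P2 : b5 - b0 != b4 - b1 by rewrite (gt_eqF (subin1 h0_1 (ltW h4_5))).
  have P3 : b5 - b0 != b3 - b1 by rewrite (gt_eqF (subin1 h0_1 (ltW h3_5))).
  have P4 : b5 - b0 != b3 - b2 by rewrite (gt_eqF (subin1 h0_2 (ltW h3_5))).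
  have P5 : b4 - b0 != b4 - b1 by rewrite (gt_eqF (subin1 h0_1 (lexx _))).
  have P6 : b4 - b0 != b3 - b1 by rewrite (gt_eqF (subin1 h0_1 (ltW h3_4))).
  have P7 : b4 - b0 != b3 - b2 by rewrite (gt_eqF (subin1 h0_2 (ltW h3_4))).
  have P8 : b4 - b1 != b3 - b1 by rewrite (gt_eqF (subin2 (lexx _) h3_4)).
  have P9 : b4 - b1 != b3 - b2 by rewrite (gt_eqF (subin1 h1_2 (ltW h3_4))).
  have P10 : b3 - b1 != b3 - b2 by rewrite (gt_eqF (subin1 h1_2 (lexx _))).
  uniq_small. }
Qed.

Lemma small7 (b0 b1 b2 b3 b4 b5 b6 : R) : b0 < b1 -> b1 < b2 -> b2 < b3 -> b3 < b4 -> b4 < b5 -> b5 < b6 -> forall a, a \in [:: b0; b1; b2; b3; b4; b5; b6] ->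
  exists t, perm_eq (a :: t) [:: b0; b1; b2; b3; b4; b5; b6] /\ uniq (gaps a t).
Proof.
move=> h0_1 h1_2 h2_3 h3_4 h4_5 h5_6 a; rewrite !inE.
have h0_2 := lt_trans h0_1 h1_2.
have h1_3 := lt_trans h1_2 h2_3.
have h2_4 := lt_trans h2_3 h3_4.
have h3_5 := lt_trans h3_4 h4_5.
have h4_6 := lt_trans h4_5 h5_6.
have h0_3 := lt_trans h0_2 h2_3.
have h1_4 := lt_trans h1_3 h3_4.
have h2_5 := lt_trans h2_4 h4_5.
have h3_6 := lt_trans h3_5 h5_6.
have h0_4 := lt_trans h0_3 h3_4.
have h1_5 := lt_trans h1_4 h4_5.
have h2_6 := lt_trans h2_5 h5_6.
have h0_5 := lt_trans h0_4 h4_5.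
have h1_6 := lt_trans h1_5 h5_6.
have h0_6 := lt_trans h0_5 h5_6.
case/orP => [/eqP ->|].
{ exists [:: b6; b1; b5; b2; b4; b3]; split; first by apply: (perm_idx (idx := [:: 0; 6; 1; 5; 2; 4; 3])).
  rewrite /gaps /=.
  rewrite ?(nd h0_6).
  rewrite ?(nd' h1_6).
  rewrite ?(nd h1_5).
  rewrite ?(nd' h2_5).
  rewrite ?(nd h2_4).
  rewrite ?(nd' h3_4).
  have P1 : b6 - b0 != b6 - b1 by rewrite (gt_eqF (subin1 h0_1 (lexx _))).
  have P2 : b6 - b0 != b5 - b1 by rewrite (gt_eqF (subin1 h0_1 (ltW h5_6))).
  have P3 : b6 - b0 != b5 - b2 by rewrite (gt_eqF (subin1 h0_2 (ltW h5_6))).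
  have P4 : b6 - b0 != b4 - b2 by rewrite (gt_eqF (subin1 h0_2 (ltW h4_6))).
  have P5 : b6 - b0 != b4 - b3 by rewrite (gt_eqF (subin1 h0_3 (ltW h4_6))).
  have P6 : b6 - b1 != b5 - b1 by rewrite (gt_eqF (subin2 (lexx _) h5_6)).
  have P7 : b6 - b1 != b5 - b2 by rewrite (gt_eqF (subin1 h1_2 (ltW h5_6))).
  have P8 : b6 - b1 != b4 - b2 by rewrite (gt_eqF (subin1 h1_2 (ltW h4_6))).
  have P9 : b6 - b1 != b4 - b3 by rewrite (gt_eqF (subin1 h1_3 (ltW h4_6))).
  have P10 : b5 - b1 != b5 - b2 by rewrite (gt_eqF (subin1 h1_2 (lexx _))).
  have P11 : b5 - b1 != b4 - b2 by rewrite (gt_eqF (subin1 h1_2 (ltW h4_5))).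
  have P12 : b5 - b1 != b4 - b3 by rewrite (gt_eqF (subin1 h1_3 (ltW h4_5))).
  have P13 : b5 - b2 != b4 - b2 by rewrite (gt_eqF (subin2 (lexx _) h4_5)).
  have P14 : b5 - b2 != b4 - b3 by rewrite (gt_eqF (subin1 h2_3 (ltW h4_5))).
  have P15 : b4 - b2 != b4 - b3 by rewrite (gt_eqF (subin1 h2_3 (lexx _))).
  uniq_small. }
case/orP => [/eqP ->|].
{ case: (eqVneq ((b6 - b5)) ((b1 - b0))) => H1.
  { case: (eqVneq ((b2 - b1)) ((b6 - b5))) => H2.
    { case: (eqVneq ((b4 - b3)) ((b3 - b2))) => H3.
      { case: (eqVneq ((b2 - b1)) ((b4 - b3))) => H4.
        { exists [:: b5; b0; b6; b3; b2; b4]; split; first by apply: (perm_idx (idx := [:: 1; 5; 0; 6; 3; 2; 4])).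
          rewrite /gaps /=.
          rewrite ?(nd h1_5).
          rewrite ?(nd' h0_5).
          rewrite ?(nd h0_6).
          rewrite ?(nd' h3_6).
          rewrite ?(nd' h2_3).
          rewrite ?(nd h2_4).
          have P3 : b5 - b1 != b6 - b3 by apply/eqP => E; clear -E h0_1 h1_2 h2_3 h3_4 h4_5 h5_6 H1 H2 H3 H4; lra.
          have P7 : b5 - b0 != b6 - b3 by apply/eqP => E; clear -E h0_1 h1_2 h2_3 h3_4 h4_5 h5_6 H1 H2 H3 H4; lra.
          have P13 : b6 - b3 != b3 - b2 by apply/eqP => E; clear -E h0_1 h1_2 h2_3 h3_4 h4_5 h5_6 H1 H2 H3 H4; lra.
          have P14 : b6 - b3 != b4 - b2 by apply/eqP => E; clear -E h0_1 h1_2 h2_3 h3_4 h4_5 h5_6 H1 H2 H3 H4; lra.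
          have P1 : b5 - b1 != b5 - b0 by rewrite (lt_eqF (subin1 h0_1 (lexx _))).
          have P2 : b5 - b1 != b6 - b0 by rewrite (lt_eqF (subin1 h0_1 (ltW h5_6))).
          have P4 : b5 - b1 != b3 - b2 by rewrite (gt_eqF (subin1 h1_2 (ltW h3_5))).
          have P5 : b5 - b1 != b4 - b2 by rewrite (gt_eqF (subin1 h1_2 (ltW h4_5))).
          have P6 : b5 - b0 != b6 - b0 by rewrite (lt_eqF (subin2 (lexx _) h5_6)).
          have P8 : b5 - b0 != b3 - b2 by rewrite (gt_eqF (subin1 h0_2 (ltW h3_5))).
          have P9 : b5 - b0 != b4 - b2 by rewrite (gt_eqF (subin1 h0_2 (ltW h4_5))).
          have P10 : b6 - b0 != b6 - b3 by rewrite (gt_eqF (subin1 h0_3 (lexx _))).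
          have P11 : b6 - b0 != b3 - b2 by rewrite (gt_eqF (subin1 h0_2 (ltW h3_6))).
          have P12 : b6 - b0 != b4 - b2 by rewrite (gt_eqF (subin1 h0_2 (ltW h4_6))).
          have P15 : b3 - b2 != b4 - b2 by rewrite (lt_eqF (subin2 (lexx _) h3_4)).
          uniq_small. }
        { exists [:: b3; b4; b2; b6; b0; b5]; split; first by apply: (perm_idx (idx := [:: 1; 3; 4; 2; 6; 0; 5])).
          rewrite /gaps /=.
          rewrite ?(nd h1_3).
          rewrite ?(nd h3_4).
          rewrite ?(nd' h2_4).
          rewrite ?(nd h2_6).
          rewrite ?(nd' h0_6).
          rewrite ?(nd h0_5).
          have P1 : b3 - b1 != b4 - b3 by apply/eqP => E; clear -E h0_1 h1_2 h2_3 h3_4 h4_5 h5_6 H1 H2 H3; lra.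
          have P2 : b3 - b1 != b4 - b2 by apply/eqP => E; move/eqP: H4; apply; clear -E h0_1 h1_2 h2_3 h3_4 h4_5 h5_6 H1 H2 H3; lra.
          have P3 : b3 - b1 != b6 - b2 by apply/eqP => E; clear -E h0_1 h1_2 h2_3 h3_4 h4_5 h5_6 H1 H2 H3; lra.
          have P14 : b6 - b2 != b5 - b0 by apply/eqP => E; clear -E h0_1 h1_2 h2_3 h3_4 h4_5 h5_6 H1 H2 H3; lra.
          have P4 : b3 - b1 != b6 - b0 by rewrite (lt_eqF (subin1 h0_1 (ltW h3_6))).
          have P5 : b3 - b1 != b5 - b0 by rewrite (lt_eqF (subin1 h0_1 (ltW h3_5))).
          have P6 : b4 - b3 != b4 - b2 by rewrite (lt_eqF (subin1 h2_3 (lexx _))).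
          have P7 : b4 - b3 != b6 - b2 by rewrite (lt_eqF (subin1 h2_3 (ltW h4_6))).
          have P8 : b4 - b3 != b6 - b0 by rewrite (lt_eqF (subin1 h0_3 (ltW h4_6))).
          have P9 : b4 - b3 != b5 - b0 by rewrite (lt_eqF (subin1 h0_3 (ltW h4_5))).
          have P10 : b4 - b2 != b6 - b2 by rewrite (lt_eqF (subin2 (lexx _) h4_6)).
          have P11 : b4 - b2 != b6 - b0 by rewrite (lt_eqF (subin1 h0_2 (ltW h4_6))).
          have P12 : b4 - b2 != b5 - b0 by rewrite (lt_eqF (subin1 h0_2 (ltW h4_5))).
          have P13 : b6 - b2 != b6 - b0 by rewrite (lt_eqF (subin1 h0_2 (lexx _))).
          have P15 : b6 - b0 != b5 - b0 by rewrite (gt_eqF (subin2 (lexx _) h5_6)).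
          uniq_small. } }
      { exists [:: b4; b3; b2; b6; b0; b5]; split; first by apply: (perm_idx (idx := [:: 1; 4; 3; 2; 6; 0; 5])).
        rewrite /gaps /=.
        rewrite ?(nd h1_4).
        rewrite ?(nd' h3_4).
        rewrite ?(nd' h2_3).
        rewrite ?(nd h2_6).
        rewrite ?(nd' h0_6).
        rewrite ?(nd h0_5).
        have P3 : b4 - b1 != b6 - b2 by apply/eqP => E; clear -E h0_1 h1_2 h2_3 h3_4 h4_5 h5_6 H1 H2; lra.
        have P6 : b4 - b3 != b3 - b2 by apply/eqP => E; move/eqP: H3; apply; clear -E h0_1 h1_2 h2_3 h3_4 h4_5 h5_6 H1 H2; lra.
        have P14 : b6 - b2 != b5 - b0 by apply/eqP => E; clear -E h0_1 h1_2 h2_3 h3_4 h4_5 h5_6 H1 H2; lra.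
        have P1 : b4 - b1 != b4 - b3 by rewrite (gt_eqF (subin1 h1_3 (lexx _))).
        have P2 : b4 - b1 != b3 - b2 by rewrite (gt_eqF (subin1 h1_2 (ltW h3_4))).
        have P4 : b4 - b1 != b6 - b0 by rewrite (lt_eqF (subin1 h0_1 (ltW h4_6))).
        have P5 : b4 - b1 != b5 - b0 by rewrite (lt_eqF (subin1 h0_1 (ltW h4_5))).
        have P7 : b4 - b3 != b6 - b2 by rewrite (lt_eqF (subin1 h2_3 (ltW h4_6))).
        have P8 : b4 - b3 != b6 - b0 by rewrite (lt_eqF (subin1 h0_3 (ltW h4_6))).
        have P9 : b4 - b3 != b5 - b0 by rewrite (lt_eqF (subin1 h0_3 (ltW h4_5))).
        have P10 : b3 - b2 != b6 - b2 by rewrite (lt_eqF (subin2 (lexx _) h3_6)).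
        have P11 : b3 - b2 != b6 - b0 by rewrite (lt_eqF (subin1 h0_2 (ltW h3_6))).
        have P12 : b3 - b2 != b5 - b0 by rewrite (lt_eqF (subin1 h0_2 (ltW h3_5))).
        have P13 : b6 - b2 != b6 - b0 by rewrite (lt_eqF (subin1 h0_2 (lexx _))).
        have P15 : b6 - b0 != b5 - b0 by rewrite (gt_eqF (subin2 (lexx _) h5_6)).
        uniq_small. } }
    { exists [:: b5; b0; b6; b2; b4; b3]; split; first by apply: (perm_idx (idx := [:: 1; 5; 0; 6; 2; 4; 3])).
      rewrite /gaps /=.
      rewrite ?(nd h1_5).
      rewrite ?(nd' h0_5).
      rewrite ?(nd h0_6).
      rewrite ?(nd' h2_6).
      rewrite ?(nd h2_4).
      rewrite ?(nd' h3_4).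
      have P3 : b5 - b1 != b6 - b2 by apply/eqP => E; move/eqP: H2; apply; clear -E h0_1 h1_2 h2_3 h3_4 h4_5 h5_6 H1; lra.
      have P7 : b5 - b0 != b6 - b2 by apply/eqP => E; clear -E h0_1 h1_2 h2_3 h3_4 h4_5 h5_6 H1; lra.
      have P1 : b5 - b1 != b5 - b0 by rewrite (lt_eqF (subin1 h0_1 (lexx _))).
      have P2 : b5 - b1 != b6 - b0 by rewrite (lt_eqF (subin1 h0_1 (ltW h5_6))).
      have P4 : b5 - b1 != b4 - b2 by rewrite (gt_eqF (subin1 h1_2 (ltW h4_5))).
      have P5 : b5 - b1 != b4 - b3 by rewrite (gt_eqF (subin1 h1_3 (ltW h4_5))).
      have P6 : b5 - b0 != b6 - b0 by rewrite (lt_eqF (subin2 (lexx _) h5_6)).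
      have P8 : b5 - b0 != b4 - b2 by rewrite (gt_eqF (subin1 h0_2 (ltW h4_5))).
      have P9 : b5 - b0 != b4 - b3 by rewrite (gt_eqF (subin1 h0_3 (ltW h4_5))).
      have P10 : b6 - b0 != b6 - b2 by rewrite (gt_eqF (subin1 h0_2 (lexx _))).
      have P11 : b6 - b0 != b4 - b2 by rewrite (gt_eqF (subin1 h0_2 (ltW h4_6))).
      have P12 : b6 - b0 != b4 - b3 by rewrite (gt_eqF (subin1 h0_3 (ltW h4_6))).
      have P13 : b6 - b2 != b4 - b2 by rewrite (gt_eqF (subin2 (lexx _) h4_6)).
      have P14 : b6 - b2 != b4 - b3 by rewrite (gt_eqF (subin1 h2_3 (ltW h4_6))).
      have P15 : b4 - b2 != b4 - b3 by rewrite (gt_eqF (subin1 h2_3 (lexx _))).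
      uniq_small. } }
  { exists [:: b6; b0; b5; b2; b4; b3]; split; first by apply: (perm_idx (idx := [:: 1; 6; 0; 5; 2; 4; 3])).
    rewrite /gaps /=.
    rewrite ?(nd h1_6).
    rewrite ?(nd' h0_6).
    rewrite ?(nd h0_5).
    rewrite ?(nd' h2_5).
    rewrite ?(nd h2_4).
    rewrite ?(nd' h3_4).
    have P2 : b6 - b1 != b5 - b0 by apply/eqP => E; move/eqP: H1; apply; clear -E h0_1 h1_2 h2_3 h3_4 h4_5 h5_6; lra.
    have P1 : b6 - b1 != b6 - b0 by rewrite (lt_eqF (subin1 h0_1 (lexx _))).
    have P3 : b6 - b1 != b5 - b2 by rewrite (gt_eqF (subin1 h1_2 (ltW h5_6))).
    have P4 : b6 - b1 != b4 - b2 by rewrite (gt_eqF (subin1 h1_2 (ltW h4_6))).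
    have P5 : b6 - b1 != b4 - b3 by rewrite (gt_eqF (subin1 h1_3 (ltW h4_6))).
    have P6 : b6 - b0 != b5 - b0 by rewrite (gt_eqF (subin2 (lexx _) h5_6)).
    have P7 : b6 - b0 != b5 - b2 by rewrite (gt_eqF (subin1 h0_2 (ltW h5_6))).
    have P8 : b6 - b0 != b4 - b2 by rewrite (gt_eqF (subin1 h0_2 (ltW h4_6))).
    have P9 : b6 - b0 != b4 - b3 by rewrite (gt_eqF (subin1 h0_3 (ltW h4_6))).
    have P10 : b5 - b0 != b5 - b2 by rewrite (gt_eqF (subin1 h0_2 (lexx _))).
    have P11 : b5 - b0 != b4 - b2 by rewrite (gt_eqF (subin1 h0_2 (ltW h4_5))).
    have P12 : b5 - b0 != b4 - b3 by rewrite (gt_eqF (subin1 h0_3 (ltW h4_5))).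
    have P13 : b5 - b2 != b4 - b2 by rewrite (gt_eqF (subin2 (lexx _) h4_5)).
    have P14 : b5 - b2 != b4 - b3 by rewrite (gt_eqF (subin1 h2_3 (ltW h4_5))).
    have P15 : b4 - b2 != b4 - b3 by rewrite (gt_eqF (subin1 h2_3 (lexx _))).
    uniq_small. } }
case/orP => [/eqP ->|].
{ case: (eqVneq ((b3 - b2)) ((b4 - b3))) => H5.
  { case: (eqVneq ((b4 - b3)) ((b2 - b1))) => H6.
    { case: (eqVneq ((b3 - b2)) ((b5 - b4))) => H7.
      { case: (eqVneq ((b1 - b0)) ((b6 - b5))) => H8.
        { exists [:: b5; b3; b4; b0; b6; b1]; split; first by apply: (perm_idx (idx := [:: 2; 5; 3; 4; 0; 6; 1])).
          rewrite /gaps /=.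
          rewrite ?(nd h2_5).
          rewrite ?(nd' h3_5).
          rewrite ?(nd h3_4).
          rewrite ?(nd' h0_4).
          rewrite ?(nd h0_6).
          rewrite ?(nd' h1_6).
          have P3 : b5 - b2 != b4 - b0 by apply/eqP => E; clear -E h0_1 h1_2 h2_3 h3_4 h4_5 h5_6 H5 H6 H7 H8; lra.
          have P7 : b5 - b3 != b4 - b0 by apply/eqP => E; clear -E h0_1 h1_2 h2_3 h3_4 h4_5 h5_6 H5 H6 H7 H8; lra.
          have P14 : b4 - b0 != b6 - b1 by apply/eqP => E; clear -E h0_1 h1_2 h2_3 h3_4 h4_5 h5_6 H5 H6 H7 H8; lra.
          have P1 : b5 - b2 != b5 - b3 by rewrite (gt_eqF (subin1 h2_3 (lexx _))).
          have P2 : b5 - b2 != b4 - b3 by rewrite (gt_eqF (subin1 h2_3 (ltW h4_5))).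
          have P4 : b5 - b2 != b6 - b0 by rewrite (lt_eqF (subin1 h0_2 (ltW h5_6))).
          have P5 : b5 - b2 != b6 - b1 by rewrite (lt_eqF (subin1 h1_2 (ltW h5_6))).
          have P6 : b5 - b3 != b4 - b3 by rewrite (gt_eqF (subin2 (lexx _) h4_5)).
          have P8 : b5 - b3 != b6 - b0 by rewrite (lt_eqF (subin1 h0_3 (ltW h5_6))).
          have P9 : b5 - b3 != b6 - b1 by rewrite (lt_eqF (subin1 h1_3 (ltW h5_6))).
          have P10 : b4 - b3 != b4 - b0 by rewrite (lt_eqF (subin1 h0_3 (lexx _))).
          have P11 : b4 - b3 != b6 - b0 by rewrite (lt_eqF (subin1 h0_3 (ltW h4_6))).
          have P12 : b4 - b3 != b6 - b1 by rewrite (lt_eqF (subin1 h1_3 (ltW h4_6))).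
          have P13 : b4 - b0 != b6 - b0 by rewrite (lt_eqF (subin2 (lexx _) h4_6)).
          have P15 : b6 - b0 != b6 - b1 by rewrite (gt_eqF (subin1 h0_1 (lexx _))).
          uniq_small. }
        { exists [:: b3; b5; b0; b6; b1; b4]; split; first by apply: (perm_idx (idx := [:: 2; 3; 5; 0; 6; 1; 4])).
          rewrite /gaps /=.
          rewrite ?(nd h2_3).
          rewrite ?(nd h3_5).
          rewrite ?(nd' h0_5).
          rewrite ?(nd h0_6).
          rewrite ?(nd' h1_6).
          rewrite ?(nd h1_4).
          have P1 : b3 - b2 != b5 - b3 by apply/eqP => E; clear -E h0_1 h1_2 h2_3 h3_4 h4_5 h5_6 H5 H6 H7; lra.
          have P9 : b5 - b3 != b4 - b1 by apply/eqP => E; clear -E h0_1 h1_2 h2_3 h3_4 h4_5 h5_6 H5 H6 H7; lra.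
          have P11 : b5 - b0 != b6 - b1 by apply/eqP => E; move/eqP: H8; apply; clear -E h0_1 h1_2 h2_3 h3_4 h4_5 h5_6 H5 H6 H7; lra.
          have P2 : b3 - b2 != b5 - b0 by rewrite (lt_eqF (subin1 h0_2 (ltW h3_5))).
          have P3 : b3 - b2 != b6 - b0 by rewrite (lt_eqF (subin1 h0_2 (ltW h3_6))).
          have P4 : b3 - b2 != b6 - b1 by rewrite (lt_eqF (subin1 h1_2 (ltW h3_6))).
          have P5 : b3 - b2 != b4 - b1 by rewrite (lt_eqF (subin1 h1_2 (ltW h3_4))).
          have P6 : b5 - b3 != b5 - b0 by rewrite (lt_eqF (subin1 h0_3 (lexx _))).
          have P7 : b5 - b3 != b6 - b0 by rewrite (lt_eqF (subin1 h0_3 (ltW h5_6))).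
          have P8 : b5 - b3 != b6 - b1 by rewrite (lt_eqF (subin1 h1_3 (ltW h5_6))).
          have P10 : b5 - b0 != b6 - b0 by rewrite (lt_eqF (subin2 (lexx _) h5_6)).
          have P12 : b5 - b0 != b4 - b1 by rewrite (gt_eqF (subin1 h0_1 (ltW h4_5))).
          have P13 : b6 - b0 != b6 - b1 by rewrite (gt_eqF (subin1 h0_1 (lexx _))).
          have P14 : b6 - b0 != b4 - b1 by rewrite (gt_eqF (subin1 h0_1 (ltW h4_6))).
          have P15 : b6 - b1 != b4 - b1 by rewrite (gt_eqF (subin2 (lexx _) h4_6)).
          uniq_small. } }
      { exists [:: b4; b3; b5; b1; b6; b0]; split; first by apply: (perm_idx (idx := [:: 2; 4; 3; 5; 1; 6; 0])).
        rewrite /gaps /=.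
        rewrite ?(nd h2_4).
        rewrite ?(nd' h3_4).
        rewrite ?(nd h3_5).
        rewrite ?(nd' h1_5).
        rewrite ?(nd h1_6).
        rewrite ?(nd' h0_6).
        have P2 : b4 - b2 != b5 - b3 by apply/eqP => E; move/eqP: H7; apply; clear -E h0_1 h1_2 h2_3 h3_4 h4_5 h5_6 H5 H6; lra.
        have P1 : b4 - b2 != b4 - b3 by rewrite (gt_eqF (subin1 h2_3 (lexx _))).
        have P3 : b4 - b2 != b5 - b1 by rewrite (lt_eqF (subin1 h1_2 (ltW h4_5))).
        have P4 : b4 - b2 != b6 - b1 by rewrite (lt_eqF (subin1 h1_2 (ltW h4_6))).
        have P5 : b4 - b2 != b6 - b0 by rewrite (lt_eqF (subin1 h0_2 (ltW h4_6))).
        have P6 : b4 - b3 != b5 - b3 by rewrite (lt_eqF (subin2 (lexx _) h4_5)).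
        have P7 : b4 - b3 != b5 - b1 by rewrite (lt_eqF (subin1 h1_3 (ltW h4_5))).
        have P8 : b4 - b3 != b6 - b1 by rewrite (lt_eqF (subin1 h1_3 (ltW h4_6))).
        have P9 : b4 - b3 != b6 - b0 by rewrite (lt_eqF (subin1 h0_3 (ltW h4_6))).
        have P10 : b5 - b3 != b5 - b1 by rewrite (lt_eqF (subin1 h1_3 (lexx _))).
        have P11 : b5 - b3 != b6 - b1 by rewrite (lt_eqF (subin1 h1_3 (ltW h5_6))).
        have P12 : b5 - b3 != b6 - b0 by rewrite (lt_eqF (subin1 h0_3 (ltW h5_6))).
        have P13 : b5 - b1 != b6 - b1 by rewrite (lt_eqF (subin2 (lexx _) h5_6)).
        have P14 : b5 - b1 != b6 - b0 by rewrite (lt_eqF (subin1 h0_1 (ltW h5_6))).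
        have P15 : b6 - b1 != b6 - b0 by rewrite (lt_eqF (subin1 h0_1 (lexx _))).
        uniq_small. } }
    { exists [:: b4; b3; b1; b5; b0; b6]; split; first by apply: (perm_idx (idx := [:: 2; 4; 3; 1; 5; 0; 6])).
      rewrite /gaps /=.
      rewrite ?(nd h2_4).
      rewrite ?(nd' h3_4).
      rewrite ?(nd' h1_3).
      rewrite ?(nd h1_5).
      rewrite ?(nd' h0_5).
      rewrite ?(nd h0_6).
      have P2 : b4 - b2 != b3 - b1 by apply/eqP => E; move/eqP: H6; apply; clear -E h0_1 h1_2 h2_3 h3_4 h4_5 h5_6 H5; lra.
      have P6 : b4 - b3 != b3 - b1 by apply/eqP => E; clear -E h0_1 h1_2 h2_3 h3_4 h4_5 h5_6 H5; lra.
      have P1 : b4 - b2 != b4 - b3 by rewrite (gt_eqF (subin1 h2_3 (lexx _))).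
      have P3 : b4 - b2 != b5 - b1 by rewrite (lt_eqF (subin1 h1_2 (ltW h4_5))).
      have P4 : b4 - b2 != b5 - b0 by rewrite (lt_eqF (subin1 h0_2 (ltW h4_5))).
      have P5 : b4 - b2 != b6 - b0 by rewrite (lt_eqF (subin1 h0_2 (ltW h4_6))).
      have P7 : b4 - b3 != b5 - b1 by rewrite (lt_eqF (subin1 h1_3 (ltW h4_5))).
      have P8 : b4 - b3 != b5 - b0 by rewrite (lt_eqF (subin1 h0_3 (ltW h4_5))).
      have P9 : b4 - b3 != b6 - b0 by rewrite (lt_eqF (subin1 h0_3 (ltW h4_6))).
      have P10 : b3 - b1 != b5 - b1 by rewrite (lt_eqF (subin2 (lexx _) h3_5)).
      have P11 : b3 - b1 != b5 - b0 by rewrite (lt_eqF (subin1 h0_1 (ltW h3_5))).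
      have P12 : b3 - b1 != b6 - b0 by rewrite (lt_eqF (subin1 h0_1 (ltW h3_6))).
      have P13 : b5 - b1 != b5 - b0 by rewrite (lt_eqF (subin1 h0_1 (lexx _))).
      have P14 : b5 - b1 != b6 - b0 by rewrite (lt_eqF (subin1 h0_1 (ltW h5_6))).
      have P15 : b5 - b0 != b6 - b0 by rewrite (lt_eqF (subin2 (lexx _) h5_6)).
      uniq_small. } }
  { exists [:: b3; b4; b1; b5; b0; b6]; split; first by apply: (perm_idx (idx := [:: 2; 3; 4; 1; 5; 0; 6])).
    rewrite /gaps /=.
    rewrite ?(nd h2_3).
    rewrite ?(nd h3_4).
    rewrite ?(nd' h1_4).
    rewrite ?(nd h1_5).
    rewrite ?(nd' h0_5).
    rewrite ?(nd h0_6).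
    have P1 : b3 - b2 != b4 - b3 by apply/eqP => E; move/eqP: H5; apply; clear -E h0_1 h1_2 h2_3 h3_4 h4_5 h5_6; lra.
    have P2 : b3 - b2 != b4 - b1 by rewrite (lt_eqF (subin1 h1_2 (ltW h3_4))).
    have P3 : b3 - b2 != b5 - b1 by rewrite (lt_eqF (subin1 h1_2 (ltW h3_5))).
    have P4 : b3 - b2 != b5 - b0 by rewrite (lt_eqF (subin1 h0_2 (ltW h3_5))).
    have P5 : b3 - b2 != b6 - b0 by rewrite (lt_eqF (subin1 h0_2 (ltW h3_6))).
    have P6 : b4 - b3 != b4 - b1 by rewrite (lt_eqF (subin1 h1_3 (lexx _))).
    have P7 : b4 - b3 != b5 - b1 by rewrite (lt_eqF (subin1 h1_3 (ltW h4_5))).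
    have P8 : b4 - b3 != b5 - b0 by rewrite (lt_eqF (subin1 h0_3 (ltW h4_5))).
    have P9 : b4 - b3 != b6 - b0 by rewrite (lt_eqF (subin1 h0_3 (ltW h4_6))).
    have P10 : b4 - b1 != b5 - b1 by rewrite (lt_eqF (subin2 (lexx _) h4_5)).
    have P11 : b4 - b1 != b5 - b0 by rewrite (lt_eqF (subin1 h0_1 (ltW h4_5))).
    have P12 : b4 - b1 != b6 - b0 by rewrite (lt_eqF (subin1 h0_1 (ltW h4_6))).
    have P13 : b5 - b1 != b5 - b0 by rewrite (lt_eqF (subin1 h0_1 (lexx _))).
    have P14 : b5 - b1 != b6 - b0 by rewrite (lt_eqF (subin1 h0_1 (ltW h5_6))).
    have P15 : b5 - b0 != b6 - b0 by rewrite (lt_eqF (subin2 (lexx _) h5_6)).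
    uniq_small. } }
case/orP => [/eqP ->|].
{ exists [:: b2; b4; b1; b5; b0; b6]; split; first by apply: (perm_idx (idx := [:: 3; 2; 4; 1; 5; 0; 6])).
  rewrite /gaps /=.
  rewrite ?(nd' h2_3).
  rewrite ?(nd h2_4).
  rewrite ?(nd' h1_4).
  rewrite ?(nd h1_5).
  rewrite ?(nd' h0_5).
  rewrite ?(nd h0_6).
  have P1 : b3 - b2 != b4 - b2 by rewrite (lt_eqF (subin2 (lexx _) h3_4)).
  have P2 : b3 - b2 != b4 - b1 by rewrite (lt_eqF (subin1 h1_2 (ltW h3_4))).
  have P3 : b3 - b2 != b5 - b1 by rewrite (lt_eqF (subin1 h1_2 (ltW h3_5))).
  have P4 : b3 - b2 != b5 - b0 by rewrite (lt_eqF (subin1 h0_2 (ltW h3_5))).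
  have P5 : b3 - b2 != b6 - b0 by rewrite (lt_eqF (subin1 h0_2 (ltW h3_6))).
  have P6 : b4 - b2 != b4 - b1 by rewrite (lt_eqF (subin1 h1_2 (lexx _))).
  have P7 : b4 - b2 != b5 - b1 by rewrite (lt_eqF (subin1 h1_2 (ltW h4_5))).
  have P8 : b4 - b2 != b5 - b0 by rewrite (lt_eqF (subin1 h0_2 (ltW h4_5))).
  have P9 : b4 - b2 != b6 - b0 by rewrite (lt_eqF (subin1 h0_2 (ltW h4_6))).
  have P10 : b4 - b1 != b5 - b1 by rewrite (lt_eqF (subin2 (lexx _) h4_5)).
  have P11 : b4 - b1 != b5 - b0 by rewrite (lt_eqF (subin1 h0_1 (ltW h4_5))).
  have P12 : b4 - b1 != b6 - b0 by rewrite (lt_eqF (subin1 h0_1 (ltW h4_6))).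
  have P13 : b5 - b1 != b5 - b0 by rewrite (lt_eqF (subin1 h0_1 (lexx _))).
  have P14 : b5 - b1 != b6 - b0 by rewrite (lt_eqF (subin1 h0_1 (ltW h5_6))).
  have P15 : b5 - b0 != b6 - b0 by rewrite (lt_eqF (subin2 (lexx _) h5_6)).
  uniq_small. }
case/orP => [/eqP ->|].
{ case: (eqVneq ((b4 - b3)) ((b2 - b1))) => H9.
  { case: (eqVneq ((b2 - b1)) ((b5 - b4))) => H10.
    { case: (eqVneq ((b1 - b0)) ((b5 - b4) + (b6 - b5))) => H11.
      { exists [:: b0; b5; b3; b6; b2; b1]; split; first by apply: (perm_idx (idx := [:: 4; 0; 5; 3; 6; 2; 1])).
        rewrite /gaps /=.
        rewrite ?(nd' h0_4).
        rewrite ?(nd h0_5).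
        rewrite ?(nd' h3_5).
        rewrite ?(nd h3_6).
        rewrite ?(nd' h2_6).
        rewrite ?(nd' h1_2).
        have P2 : b4 - b0 != b5 - b3 by apply/eqP => E; clear -E h0_1 h1_2 h2_3 h3_4 h4_5 h5_6 H9 H10 H11; lra.
        have P3 : b4 - b0 != b6 - b3 by apply/eqP => E; clear -E h0_1 h1_2 h2_3 h3_4 h4_5 h5_6 H9 H10 H11; lra.
        have P4 : b4 - b0 != b6 - b2 by apply/eqP => E; clear -E h0_1 h1_2 h2_3 h3_4 h4_5 h5_6 H9 H10 H11; lra.
        have P7 : b5 - b0 != b6 - b3 by apply/eqP => E; clear -E h0_1 h1_2 h2_3 h3_4 h4_5 h5_6 H9 H10 H11; lra.
        have P8 : b5 - b0 != b6 - b2 by apply/eqP => E; clear -E h0_1 h1_2 h2_3 h3_4 h4_5 h5_6 H9 H10 H11; lra.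
        have P12 : b5 - b3 != b2 - b1 by apply/eqP => E; clear -E h0_1 h1_2 h2_3 h3_4 h4_5 h5_6 H9 H10 H11; lra.
        have P14 : b6 - b3 != b2 - b1 by apply/eqP => E; clear -E h0_1 h1_2 h2_3 h3_4 h4_5 h5_6 H9 H10 H11; lra.
        have P15 : b6 - b2 != b2 - b1 by apply/eqP => E; clear -E h0_1 h1_2 h2_3 h3_4 h4_5 h5_6 H9 H10 H11; lra.
        have P1 : b4 - b0 != b5 - b0 by rewrite (lt_eqF (subin2 (lexx _) h4_5)).
        have P5 : b4 - b0 != b2 - b1 by rewrite (gt_eqF (subin1 h0_1 (ltW h2_4))).
        have P6 : b5 - b0 != b5 - b3 by rewrite (gt_eqF (subin1 h0_3 (lexx _))).
        have P9 : b5 - b0 != b2 - b1 by rewrite (gt_eqF (subin1 h0_1 (ltW h2_5))).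
        have P10 : b5 - b3 != b6 - b3 by rewrite (lt_eqF (subin2 (lexx _) h5_6)).
        have P11 : b5 - b3 != b6 - b2 by rewrite (lt_eqF (subin1 h2_3 (ltW h5_6))).
        have P13 : b6 - b3 != b6 - b2 by rewrite (lt_eqF (subin1 h2_3 (lexx _))).
        uniq_small. }
      { exists [:: b0; b6; b1; b2; b5; b3]; split; first by apply: (perm_idx (idx := [:: 4; 0; 6; 1; 2; 5; 3])).
        rewrite /gaps /=.
        rewrite ?(nd' h0_4).
        rewrite ?(nd h0_6).
        rewrite ?(nd' h1_6).
        rewrite ?(nd h1_2).
        rewrite ?(nd h2_5).
        rewrite ?(nd' h3_5).
        have P2 : b4 - b0 != b6 - b1 by apply/eqP => E; move/eqP: H11; apply; clear -E h0_1 h1_2 h2_3 h3_4 h4_5 h5_6 H9 H10; lra.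
        have P4 : b4 - b0 != b5 - b2 by apply/eqP => E; clear -E h0_1 h1_2 h2_3 h3_4 h4_5 h5_6 H9 H10; lra.
        have P5 : b4 - b0 != b5 - b3 by apply/eqP => E; clear -E h0_1 h1_2 h2_3 h3_4 h4_5 h5_6 H9 H10; lra.
        have P13 : b2 - b1 != b5 - b2 by apply/eqP => E; clear -E h0_1 h1_2 h2_3 h3_4 h4_5 h5_6 H9 H10; lra.
        have P14 : b2 - b1 != b5 - b3 by apply/eqP => E; clear -E h0_1 h1_2 h2_3 h3_4 h4_5 h5_6 H9 H10; lra.
        have P1 : b4 - b0 != b6 - b0 by rewrite (lt_eqF (subin2 (lexx _) h4_6)).
        have P3 : b4 - b0 != b2 - b1 by rewrite (gt_eqF (subin1 h0_1 (ltW h2_4))).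
        have P6 : b6 - b0 != b6 - b1 by rewrite (gt_eqF (subin1 h0_1 (lexx _))).
        have P7 : b6 - b0 != b2 - b1 by rewrite (gt_eqF (subin1 h0_1 (ltW h2_6))).
        have P8 : b6 - b0 != b5 - b2 by rewrite (gt_eqF (subin1 h0_2 (ltW h5_6))).
        have P9 : b6 - b0 != b5 - b3 by rewrite (gt_eqF (subin1 h0_3 (ltW h5_6))).
        have P10 : b6 - b1 != b2 - b1 by rewrite (gt_eqF (subin2 (lexx _) h2_6)).
        have P11 : b6 - b1 != b5 - b2 by rewrite (gt_eqF (subin1 h1_2 (ltW h5_6))).
        have P12 : b6 - b1 != b5 - b3 by rewrite (gt_eqF (subin1 h1_3 (ltW h5_6))).
        have P15 : b5 - b2 != b5 - b3 by rewrite (gt_eqF (subin1 h2_3 (lexx _))).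
        uniq_small. } }
    { exists [:: b1; b3; b2; b5; b0; b6]; split; first by apply: (perm_idx (idx := [:: 4; 1; 3; 2; 5; 0; 6])).
      rewrite /gaps /=.
      rewrite ?(nd' h1_4).
      rewrite ?(nd h1_3).
      rewrite ?(nd' h2_3).
      rewrite ?(nd h2_5).
      rewrite ?(nd' h0_5).
      rewrite ?(nd h0_6).
      have P3 : b4 - b1 != b5 - b2 by apply/eqP => E; move/eqP: H10; apply; clear -E h0_1 h1_2 h2_3 h3_4 h4_5 h5_6 H9; lra.
      have P7 : b3 - b1 != b5 - b2 by apply/eqP => E; clear -E h0_1 h1_2 h2_3 h3_4 h4_5 h5_6 H9; lra.
      have P1 : b4 - b1 != b3 - b1 by rewrite (gt_eqF (subin2 (lexx _) h3_4)).
      have P2 : b4 - b1 != b3 - b2 by rewrite (gt_eqF (subin1 h1_2 (ltW h3_4))).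
      have P4 : b4 - b1 != b5 - b0 by rewrite (lt_eqF (subin1 h0_1 (ltW h4_5))).
      have P5 : b4 - b1 != b6 - b0 by rewrite (lt_eqF (subin1 h0_1 (ltW h4_6))).
      have P6 : b3 - b1 != b3 - b2 by rewrite (gt_eqF (subin1 h1_2 (lexx _))).
      have P8 : b3 - b1 != b5 - b0 by rewrite (lt_eqF (subin1 h0_1 (ltW h3_5))).
      have P9 : b3 - b1 != b6 - b0 by rewrite (lt_eqF (subin1 h0_1 (ltW h3_6))).
      have P10 : b3 - b2 != b5 - b2 by rewrite (lt_eqF (subin2 (lexx _) h3_5)).
      have P11 : b3 - b2 != b5 - b0 by rewrite (lt_eqF (subin1 h0_2 (ltW h3_5))).
      have P12 : b3 - b2 != b6 - b0 by rewrite (lt_eqF (subin1 h0_2 (ltW h3_6))).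
      have P13 : b5 - b2 != b5 - b0 by rewrite (lt_eqF (subin1 h0_2 (lexx _))).
      have P14 : b5 - b2 != b6 - b0 by rewrite (lt_eqF (subin1 h0_2 (ltW h5_6))).
      have P15 : b5 - b0 != b6 - b0 by rewrite (lt_eqF (subin2 (lexx _) h5_6)).
      uniq_small. } }
  { exists [:: b2; b3; b1; b5; b0; b6]; split; first by apply: (perm_idx (idx := [:: 4; 2; 3; 1; 5; 0; 6])).
    rewrite /gaps /=.
    rewrite ?(nd' h2_4).
    rewrite ?(nd h2_3).
    rewrite ?(nd' h1_3).
    rewrite ?(nd h1_5).
    rewrite ?(nd' h0_5).
    rewrite ?(nd h0_6).
    have P2 : b4 - b2 != b3 - b1 by apply/eqP => E; move/eqP: H9; apply; clear -E h0_1 h1_2 h2_3 h3_4 h4_5 h5_6; lra.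
    have P1 : b4 - b2 != b3 - b2 by rewrite (gt_eqF (subin2 (lexx _) h3_4)).
    have P3 : b4 - b2 != b5 - b1 by rewrite (lt_eqF (subin1 h1_2 (ltW h4_5))).
    have P4 : b4 - b2 != b5 - b0 by rewrite (lt_eqF (subin1 h0_2 (ltW h4_5))).
    have P5 : b4 - b2 != b6 - b0 by rewrite (lt_eqF (subin1 h0_2 (ltW h4_6))).
    have P6 : b3 - b2 != b3 - b1 by rewrite (lt_eqF (subin1 h1_2 (lexx _))).
    have P7 : b3 - b2 != b5 - b1 by rewrite (lt_eqF (subin1 h1_2 (ltW h3_5))).
    have P8 : b3 - b2 != b5 - b0 by rewrite (lt_eqF (subin1 h0_2 (ltW h3_5))).
    have P9 : b3 - b2 != b6 - b0 by rewrite (lt_eqF (subin1 h0_2 (ltW h3_6))).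
    have P10 : b3 - b1 != b5 - b1 by rewrite (lt_eqF (subin2 (lexx _) h3_5)).
    have P11 : b3 - b1 != b5 - b0 by rewrite (lt_eqF (subin1 h0_1 (ltW h3_5))).
    have P12 : b3 - b1 != b6 - b0 by rewrite (lt_eqF (subin1 h0_1 (ltW h3_6))).
    have P13 : b5 - b1 != b5 - b0 by rewrite (lt_eqF (subin1 h0_1 (lexx _))).
    have P14 : b5 - b1 != b6 - b0 by rewrite (lt_eqF (subin1 h0_1 (ltW h5_6))).
    have P15 : b5 - b0 != b6 - b0 by rewrite (lt_eqF (subin2 (lexx _) h5_6)).
    uniq_small. } }
case/orP => [/eqP ->|].
{ case: (eqVneq ((b1 - b0)) ((b6 - b5))) => H12.
  { case: (eqVneq ((b5 - b4)) ((b1 - b0))) => H13.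
    { case: (eqVneq ((b1 - b0) + (b2 - b1)) ((b4 - b3))) => H14.
      { exists [:: b2; b1; b6; b0; b3; b4]; split; first by apply: (perm_idx (idx := [:: 5; 2; 1; 6; 0; 3; 4])).
        rewrite /gaps /=.
        rewrite ?(nd' h2_5).
        rewrite ?(nd' h1_2).
        rewrite ?(nd h1_6).
        rewrite ?(nd' h0_6).
        rewrite ?(nd h0_3).
        rewrite ?(nd h3_4).
        have P1 : b5 - b2 != b2 - b1 by apply/eqP => E; clear -E h0_1 h1_2 h2_3 h3_4 h4_5 h5_6 H12 H13 H14; lra.
        have P4 : b5 - b2 != b3 - b0 by apply/eqP => E; clear -E h0_1 h1_2 h2_3 h3_4 h4_5 h5_6 H12 H13 H14; lra.
        have P9 : b2 - b1 != b4 - b3 by apply/eqP => E; clear -E h0_1 h1_2 h2_3 h3_4 h4_5 h5_6 H12 H13 H14; lra.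
        have P11 : b6 - b1 != b3 - b0 by apply/eqP => E; clear -E h0_1 h1_2 h2_3 h3_4 h4_5 h5_6 H12 H13 H14; lra.
        have P15 : b3 - b0 != b4 - b3 by apply/eqP => E; clear -E h0_1 h1_2 h2_3 h3_4 h4_5 h5_6 H12 H13 H14; lra.
        have P2 : b5 - b2 != b6 - b1 by rewrite (lt_eqF (subin1 h1_2 (ltW h5_6))).
        have P3 : b5 - b2 != b6 - b0 by rewrite (lt_eqF (subin1 h0_2 (ltW h5_6))).
        have P5 : b5 - b2 != b4 - b3 by rewrite (gt_eqF (subin1 h2_3 (ltW h4_5))).
        have P6 : b2 - b1 != b6 - b1 by rewrite (lt_eqF (subin2 (lexx _) h2_6)).
        have P7 : b2 - b1 != b6 - b0 by rewrite (lt_eqF (subin1 h0_1 (ltW h2_6))).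
        have P8 : b2 - b1 != b3 - b0 by rewrite (lt_eqF (subin1 h0_1 (ltW h2_3))).
        have P10 : b6 - b1 != b6 - b0 by rewrite (lt_eqF (subin1 h0_1 (lexx _))).
        have P12 : b6 - b1 != b4 - b3 by rewrite (gt_eqF (subin1 h1_3 (ltW h4_6))).
        have P13 : b6 - b0 != b3 - b0 by rewrite (gt_eqF (subin2 (lexx _) h3_6)).
        have P14 : b6 - b0 != b4 - b3 by rewrite (gt_eqF (subin1 h0_3 (ltW h4_6))).
        uniq_small. }
      { exists [:: b1; b6; b0; b3; b2; b4]; split; first by apply: (perm_idx (idx := [:: 5; 1; 6; 0; 3; 2; 4])).
        rewrite /gaps /=.
        rewrite ?(nd' h1_5).
        rewrite ?(nd h1_6).
        rewrite ?(nd' h0_6).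
        rewrite ?(nd h0_3).
        rewrite ?(nd' h2_3).
        rewrite ?(nd h2_4).
        have P3 : b5 - b1 != b3 - b0 by apply/eqP => E; clear -E h0_1 h1_2 h2_3 h3_4 h4_5 h5_6 H12 H13; lra.
        have P7 : b6 - b1 != b3 - b0 by apply/eqP => E; clear -E h0_1 h1_2 h2_3 h3_4 h4_5 h5_6 H12 H13; lra.
        have P14 : b3 - b0 != b4 - b2 by apply/eqP => E; move/eqP: H14; apply; clear -E h0_1 h1_2 h2_3 h3_4 h4_5 h5_6 H12 H13; lra.
        have P1 : b5 - b1 != b6 - b1 by rewrite (lt_eqF (subin2 (lexx _) h5_6)).
        have P2 : b5 - b1 != b6 - b0 by rewrite (lt_eqF (subin1 h0_1 (ltW h5_6))).
        have P4 : b5 - b1 != b3 - b2 by rewrite (gt_eqF (subin1 h1_2 (ltW h3_5))).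
        have P5 : b5 - b1 != b4 - b2 by rewrite (gt_eqF (subin1 h1_2 (ltW h4_5))).
        have P6 : b6 - b1 != b6 - b0 by rewrite (lt_eqF (subin1 h0_1 (lexx _))).
        have P8 : b6 - b1 != b3 - b2 by rewrite (gt_eqF (subin1 h1_2 (ltW h3_6))).
        have P9 : b6 - b1 != b4 - b2 by rewrite (gt_eqF (subin1 h1_2 (ltW h4_6))).
        have P10 : b6 - b0 != b3 - b0 by rewrite (gt_eqF (subin2 (lexx _) h3_6)).
        have P11 : b6 - b0 != b3 - b2 by rewrite (gt_eqF (subin1 h0_2 (ltW h3_6))).
        have P12 : b6 - b0 != b4 - b2 by rewrite (gt_eqF (subin1 h0_2 (ltW h4_6))).
        have P13 : b3 - b0 != b3 - b2 by rewrite (gt_eqF (subin1 h0_2 (lexx _))).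
        have P15 : b3 - b2 != b4 - b2 by rewrite (lt_eqF (subin2 (lexx _) h3_4)).
        uniq_small. } }
    { exists [:: b1; b6; b0; b4; b2; b3]; split; first by apply: (perm_idx (idx := [:: 5; 1; 6; 0; 4; 2; 3])).
      rewrite /gaps /=.
      rewrite ?(nd' h1_5).
      rewrite ?(nd h1_6).
      rewrite ?(nd' h0_6).
      rewrite ?(nd h0_4).
      rewrite ?(nd' h2_4).
      rewrite ?(nd h2_3).
      have P3 : b5 - b1 != b4 - b0 by apply/eqP => E; move/eqP: H13; apply; clear -E h0_1 h1_2 h2_3 h3_4 h4_5 h5_6 H12; lra.
      have P7 : b6 - b1 != b4 - b0 by apply/eqP => E; clear -E h0_1 h1_2 h2_3 h3_4 h4_5 h5_6 H12; lra.
      have P1 : b5 - b1 != b6 - b1 by rewrite (lt_eqF (subin2 (lexx _) h5_6)).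
      have P2 : b5 - b1 != b6 - b0 by rewrite (lt_eqF (subin1 h0_1 (ltW h5_6))).
      have P4 : b5 - b1 != b4 - b2 by rewrite (gt_eqF (subin1 h1_2 (ltW h4_5))).
      have P5 : b5 - b1 != b3 - b2 by rewrite (gt_eqF (subin1 h1_2 (ltW h3_5))).
      have P6 : b6 - b1 != b6 - b0 by rewrite (lt_eqF (subin1 h0_1 (lexx _))).
      have P8 : b6 - b1 != b4 - b2 by rewrite (gt_eqF (subin1 h1_2 (ltW h4_6))).
      have P9 : b6 - b1 != b3 - b2 by rewrite (gt_eqF (subin1 h1_2 (ltW h3_6))).
      have P10 : b6 - b0 != b4 - b0 by rewrite (gt_eqF (subin2 (lexx _) h4_6)).
      have P11 : b6 - b0 != b4 - b2 by rewrite (gt_eqF (subin1 h0_2 (ltW h4_6))).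
      have P12 : b6 - b0 != b3 - b2 by rewrite (gt_eqF (subin1 h0_2 (ltW h3_6))).
      have P13 : b4 - b0 != b4 - b2 by rewrite (gt_eqF (subin1 h0_2 (lexx _))).
      have P14 : b4 - b0 != b3 - b2 by rewrite (gt_eqF (subin1 h0_2 (ltW h3_4))).
      have P15 : b4 - b2 != b3 - b2 by rewrite (gt_eqF (subin2 (lexx _) h3_4)).
      uniq_small. } }
  { exists [:: b0; b6; b1; b4; b2; b3]; split; first by apply: (perm_idx (idx := [:: 5; 0; 6; 1; 4; 2; 3])).
    rewrite /gaps /=.
    rewrite ?(nd' h0_5).
    rewrite ?(nd h0_6).
    rewrite ?(nd' h1_6).
    rewrite ?(nd h1_4).
    rewrite ?(nd' h2_4).
    rewrite ?(nd h2_3).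
    have P2 : b5 - b0 != b6 - b1 by apply/eqP => E; move/eqP: H12; apply; clear -E h0_1 h1_2 h2_3 h3_4 h4_5 h5_6; lra.
    have P1 : b5 - b0 != b6 - b0 by rewrite (lt_eqF (subin2 (lexx _) h5_6)).
    have P3 : b5 - b0 != b4 - b1 by rewrite (gt_eqF (subin1 h0_1 (ltW h4_5))).
    have P4 : b5 - b0 != b4 - b2 by rewrite (gt_eqF (subin1 h0_2 (ltW h4_5))).
    have P5 : b5 - b0 != b3 - b2 by rewrite (gt_eqF (subin1 h0_2 (ltW h3_5))).
    have P6 : b6 - b0 != b6 - b1 by rewrite (gt_eqF (subin1 h0_1 (lexx _))).
    have P7 : b6 - b0 != b4 - b1 by rewrite (gt_eqF (subin1 h0_1 (ltW h4_6))).
    have P8 : b6 - b0 != b4 - b2 by rewrite (gt_eqF (subin1 h0_2 (ltW h4_6))).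
    have P9 : b6 - b0 != b3 - b2 by rewrite (gt_eqF (subin1 h0_2 (ltW h3_6))).
    have P10 : b6 - b1 != b4 - b1 by rewrite (gt_eqF (subin2 (lexx _) h4_6)).
    have P11 : b6 - b1 != b4 - b2 by rewrite (gt_eqF (subin1 h1_2 (ltW h4_6))).
    have P12 : b6 - b1 != b3 - b2 by rewrite (gt_eqF (subin1 h1_2 (ltW h3_6))).
    have P13 : b4 - b1 != b4 - b2 by rewrite (gt_eqF (subin1 h1_2 (lexx _))).
    have P14 : b4 - b1 != b3 - b2 by rewrite (gt_eqF (subin1 h1_2 (ltW h3_4))).
    have P15 : b4 - b2 != b3 - b2 by rewrite (gt_eqF (subin2 (lexx _) h3_4)).
    uniq_small. } }
move/eqP ->.
{ exists [:: b0; b5; b1; b4; b2; b3]; split; first by apply: (perm_idx (idx := [:: 6; 0; 5; 1; 4; 2; 3])).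
  rewrite /gaps /=.
  rewrite ?(nd' h0_6).
  rewrite ?(nd h0_5).
  rewrite ?(nd' h1_5).
  rewrite ?(nd h1_4).
  rewrite ?(nd' h2_4).
  rewrite ?(nd h2_3).
  have P1 : b6 - b0 != b5 - b0 by rewrite (gt_eqF (subin2 (lexx _) h5_6)).
  have P2 : b6 - b0 != b5 - b1 by rewrite (gt_eqF (subin1 h0_1 (ltW h5_6))).
  have P3 : b6 - b0 != b4 - b1 by rewrite (gt_eqF (subin1 h0_1 (ltW h4_6))).
  have P4 : b6 - b0 != b4 - b2 by rewrite (gt_eqF (subin1 h0_2 (ltW h4_6))).
  have P5 : b6 - b0 != b3 - b2 by rewrite (gt_eqF (subin1 h0_2 (ltW h3_6))).
  have P6 : b5 - b0 != b5 - b1 by rewrite (gt_eqF (subin1 h0_1 (lexx _))).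
  have P7 : b5 - b0 != b4 - b1 by rewrite (gt_eqF (subin1 h0_1 (ltW h4_5))).
  have P8 : b5 - b0 != b4 - b2 by rewrite (gt_eqF (subin1 h0_2 (ltW h4_5))).
  have P9 : b5 - b0 != b3 - b2 by rewrite (gt_eqF (subin1 h0_2 (ltW h3_5))).
  have P10 : b5 - b1 != b4 - b1 by rewrite (gt_eqF (subin2 (lexx _) h4_5)).
  have P11 : b5 - b1 != b4 - b2 by rewrite (gt_eqF (subin1 h1_2 (ltW h4_5))).
  have P12 : b5 - b1 != b3 - b2 by rewrite (gt_eqF (subin1 h1_2 (ltW h3_5))).
  have P13 : b4 - b1 != b4 - b2 by rewrite (gt_eqF (subin1 h1_2 (lexx _))).
  have P14 : b4 - b1 != b3 - b2 by rewrite (gt_eqF (subin1 h1_2 (ltW h3_4))).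
  have P15 : b4 - b2 != b3 - b2 by rewrite (gt_eqF (subin2 (lexx _) h3_4)).
  uniq_small. }
Qed.

End Small.
Local Open Scope ring_scope.
Theorem theorem2 (R : realType) (A : seq R) :
  uniq A ->
  ((energy A)%:R : R) < (5%:R / 2%:R) * ((size A) ^ 2)%:R ->
  forall a : R, a \in A ->
    exists t : seq R,
      perm_eq (a :: t) A /\ uniq (gaps a t).
Proof.
move=> UA HE a Ha.
have Hn : (0 < size A)%N by case: (A) Ha.
case: (leqP 8 (size A)) => Hs.
  have SA : size A = (size A).-1.+1 by rewrite prednK.
  move: HE Hs; move: (SA); set N := (size A).-1 => SA' HE Hs.
  have HI : (index a A < N.+1)%N by rewrite -SA' index_mem.
  have HN : (7 <= N)%N by rewrite SA' in Hs.
  have HE' : ((energy A)%:R : R) < 5%:R / 2%:R * ((N.+1 ^ 2)%N)%:R by rewrite -SA'.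
  have [s [s0 Hs']] := core UA SA' (Ordinal HI) HN HE'.
  have [t [Ht1 Ht2]] := path_ok SA' s0 Hs'.
  by exists t; move: Ht1 Ht2; rewrite /Af /= nth_index.
have Hsort := sort_lt_sorted A; rewrite UA in Hsort.
have Hperm : perm_eq (sort <=%O A) A by rewrite perm_sort.
have Hmem : a \in sort <=%O A by rewrite mem_sort.
have Hsz : size (sort <=%O A) = size A by rewrite size_sort.
suff [t [H1 H2]] : exists t, perm_eq (a :: t) (sort <=%O A) /\ uniq (gaps a t).
  by exists t; split => //; exact: perm_trans H1 Hperm.
move: Hsort Hmem; rewrite -Hsz in Hs.
case: (sort _ _) Hs => [|b0 [|b1 [|b2 [|b3 [|b4 [|b5 [|b6 [|b7 l]]]]]]]] //= Hs Hso Hm.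
- by apply: small1.
- by case/andP: Hso => ? _; apply: small2.
- by do 2 case/andP: Hso => ? Hso; apply: small3.
- by do 3 case/andP: Hso => ? Hso; apply: small4.
- by do 4 case/andP: Hso => ? Hso; apply: small5.
- by do 5 case/andP: Hso => ? Hso; apply: small6.
- by do 6 case/andP: Hso => ? Hso; apply: small7.
Qed.
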